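(* For $\tau$ in the upper half-plane, $$\frac{2}{\mathfrak{p}(8\tau)}=\frac{1-v^2(\tau)}{v(\tau)}=\frac{1}{v(\tau)}-v(\tau).$$
   Context: $q=e^{2\pi i\tau}$ and $q^r:=e^{2\pi i r\tau}$ for rational $r$. $v(\tau)=q^{1/2}\prod_{n\ge1}(1-q^n)^{\left(\frac{8}{n}\right)}$ with $\left(\frac{8}{n}\right)$ the Kronecker symbol, and $\mathfrak{p}(\tau)=2q^{1/16}\prod_{n\ge1}\left(\frac{1+q^{n/2}}{1+q^{n/2-1/4}}\right)^2$ (equivalently $\mathfrak{f}_2(\tau/2)^2/\mathfrak{f}(\tau/2)^2$ in terms of the Weber–Schläfli functions). *)

(* Defs.v *)
From Stdlib Require Import Reals ZArith.
From Coquelicot Require Export Coquelicot.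
Open Scope R_scope.

Definition cexp (z : C) : C :=
  (exp (Re z) * cos (Im z), exp (Re z) * sin (Im z)).

Definition qpow (r : R) (tau : C) : C :=
  cexp (RtoC (2 * PI * r) * Ci * tau)%C.

(* Kronecker symbol (8/n) for n >= 1: 0 if n even, 1 if n = +-1 mod 8,
   -1 if n = +-3 mod 8. *)
Definition kron8 (n : nat) : Z :=
  match (n mod 8)%nat with
  | 1%nat | 7%nat => 1%Z
  | 3%nat | 5%nat => (-1)%Z
  | _ => 0%Z
  end.

Definition zpowC (x : C) (k : Z) : C :=
  match k with
  | Z0 => 1%C
  | Zpos p => Cpow x (Pos.to_nat p)
  | Zneg p => Cinv (Cpow x (Pos.to_nat p))
  end.

Fixpoint cprod (f : nat -> C) (N : nat) : C :=
  match N with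
  | O => 1%C
  | S m => (cprod f m * f (S m))%C
  end.

Definition v_partial (tau : C) (N : nat) : C :=
  (qpow (1/2) tau *
   cprod (fun n => zpowC (1 - qpow (INR n) tau)%C (kron8 n)) N)%C.

Definition p_partial (tau : C) (N : nat) : C :=
  (RtoC 2 * qpow (1/16) tau *
   cprod (fun n => Cpow ((1 + qpow (INR n / 2) tau) /
                         (1 + qpow (INR n / 2 - 1/4) tau)) 2)%C N)%C.

(* Main.v *)
Require Import Defs.
From Stdlib Require Import Reals.
From Coquelicot Require Import Coquelicot.
Open Scope R_scope.

From Stdlib Require Import Lra Lia Psatz Arith.
From Coquelicot Require Import Coquelicot.

Local Open Scope C_scope.


Fixpoint sumC (f : nat -> C) (n : nat) : C :=
  match n with O => 0 | S m => sumC f m + f m end.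
Fixpoint prodC (f : nat -> C) (n : nat) : C :=
  match n with O => 1 | S m => prodC f m * f m end.
Fixpoint sumR (f : nat -> R) (n : nat) : R :=
  match n with O => 0%R | S m => (sumR f m + f m)%R end.

Lemma sumC_ext f g n : (forall k, (k < n)%nat -> f k = g k) -> sumC f n = sumC g n.
Proof. induction n; simpl; intros H; auto. rewrite IHn by (intros; apply H; lia). rewrite H by lia; auto. Qed.
Lemma prodC_ext f g n : (forall k, (k < n)%nat -> f k = g k) -> prodC f n = prodC g n.
Proof. induction n; simpl; intros H; auto. rewrite IHn by (intros; apply H; lia). rewrite H by lia; auto. Qed.
Lemma sumR_ext f g n : (forall k, (k < n)%nat -> f k = g k) -> sumR f n = sumR g n.
Proof. induction n; simpl; intros H; auto. rewrite IHn by (intros; apply H; lia). rewrite H by lia; auto. Qed.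

Lemma sumC_front f n : sumC f (S n) = f 0%nat + sumC (fun k => f (S k)) n.
Proof. induction n. simpl; ring. change (sumC f (S (S n))) with (sumC f (S n) + f (S n)).
 rewrite IHn. simpl. ring. Qed.
Lemma prodC_front f n : prodC f (S n) = f 0%nat * prodC (fun k => f (S k)) n.
Proof. induction n. simpl; ring. change (prodC f (S (S n))) with (prodC f (S n) * f (S n)).
 rewrite IHn. simpl. ring. Qed.

Lemma sumC_add f a b : sumC f (a+b) = sumC f a + sumC (fun k => f (a+k)%nat) b.
Proof. induction b; simpl. rewrite Nat.add_0_r; ring. rewrite Nat.add_succ_r; simpl; rewrite IHb; ring. Qed.
Lemma prodC_add f a b : prodC f (a+b) = prodC f a * prodC (fun k => f (a+k)%nat) b.
Proof. induction b; simpl. rewrite Nat.add_0_r; ring. rewrite Nat.add_succ_r; simpl; rewrite IHb; ring. Qed.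

Lemma sumC_rev f n : sumC f n = sumC (fun k => f (n - 1 - k)%nat) n.
Proof. induction n. reflexivity. change (sumC f (S n)) with (sumC f n + f n). rewrite IHn. rewrite sumC_front.
 replace (S n - 1 - 0)%nat with n by lia. rewrite Cplus_comm. f_equal.
 apply sumC_ext. intros k Hk. f_equal. lia. Qed.

Lemma sumC_plus f g n : sumC (fun k => f k + g k) n = sumC f n + sumC g n.
Proof. induction n; simpl. ring. rewrite IHn; ring. Qed.
Lemma sumC_scal c f n : sumC (fun k => c * f k) n = c * sumC f n.
Proof. induction n; simpl. ring. rewrite IHn; ring. Qed.
Lemma prodC_mult f g n : prodC (fun k => f k * g k) n = prodC f n * prodC g n.
Proof. induction n; simpl. ring. rewrite IHn; ring. Qed.
Lemma prodC_one n : prodC (fun _ => RtoC 1) n = 1.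
Proof. induction n; simpl; auto. rewrite IHn; ring. Qed.

Lemma sumC_split2 f n : sumC f (2*n) = sumC (fun k => f (2*k)%nat) n + sumC (fun k => f (2*k+1)%nat) n.
Proof. induction n. simpl; ring. replace (2 * S n)%nat with (S (S (2*n))) by lia. simpl.
 simpl in IHn. rewrite IHn. replace (n + (n+0) + 1)%nat with (S (n + (n+0))) by lia. ring. Qed.
Lemma prodC_split2 f n : prodC f (2*n) = prodC (fun k => f (2*k)%nat * f (2*k+1)%nat) n.
Proof. induction n. simpl; ring. replace (2 * S n)%nat with (S (S (2*n))) by lia. simpl.
 simpl in IHn. rewrite IHn. replace (n + (n+0) + 1)%nat with (S (n + (n+0))) by lia. ring. Qed.
Lemma prodC_blocks f k n : prodC f (k*n) = prodC (fun j => prodC (fun r => f (k*j + r)%nat) k) n.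
Proof. induction n. rewrite Nat.mul_0_r; reflexivity. replace (k * S n)%nat with (k*n + k)%nat by lia.
 rewrite prodC_add, IHn. reflexivity. Qed.

Lemma sumR_nonneg f n : (forall k, 0 <= f k)%R -> (0 <= sumR f n)%R.
Proof. intros H; induction n; simpl. lra. specialize (H n); lra. Qed.
Lemma sumR_le f g n : (forall k, f k <= g k)%R -> (sumR f n <= sumR g n)%R.
Proof. intros H; induction n; simpl. lra. specialize (H n); lra. Qed.

Lemma Cmod_sumC f n : (Cmod (sumC f n) <= sumR (fun k => Cmod (f k)) n)%R.
Proof. induction n; simpl. rewrite Cmod_0; lra. eapply Rle_trans. apply Cmod_triangle. lra. Qed.

Lemma Cmod_ge_1m c : (1 - Cmod c <= Cmod (1 + c))%R.
Proof. assert (H := Cmod_triangle (1+c) (-c)). replace (1 + c + - c) with (RtoC 1) in H by ring.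
 rewrite Cmod_1, Cmod_opp in H. lra. Qed.

Lemma Cmod_sub_ge a b : (Cmod a - Cmod b <= Cmod (a - b))%R.
Proof. assert (H := Cmod_triangle (a-b) b). replace (a - b + b) with a in H by ring. lra. Qed.

Lemma geom_sumR r n : (r <> 1)%R -> sumR (fun i => r ^ i)%R n = ((1 - r ^ n) / (1 - r))%R.
Proof. intros H. assert (1 - r <> 0)%R by lra. induction n; simpl. field; auto.
 rewrite IHn. field; auto. Qed.

Lemma geom_sumR_le K r n : (0 <= K)%R -> (0 <= r < 1)%R -> (sumR (fun i => K * r ^ i)%R n <= K / (1 - r))%R.
Proof. intros HK Hr.
 assert (E : sumR (fun i => K * r ^ i)%R n = (K * sumR (fun i => r ^ i) n)%R).
 { induction n; simpl. ring. rewrite IHn. ring. }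
 rewrite E, geom_sumR by lra. assert (0 <= r ^ n)%R by (apply pow_le; lra).
 unfold Rdiv. rewrite <- Rmult_assoc. apply Rmult_le_compat_r. apply Rlt_le, Rinv_0_lt_compat; lra.
 nra. Qed.

Lemma pow_le_one r n : (0 <= r <= 1)%R -> (r ^ n <= 1)%R.
Proof. intros H. rewrite <- (pow1 n). apply pow_incr. lra. Qed.
Lemma pow_decr r n m : (0 <= r <= 1)%R -> (n <= m)%nat -> (r ^ m <= r ^ n)%R.
Proof. intros H Hnm. replace m with (n + (m - n))%nat by lia. rewrite pow_add.
 assert (0 <= r ^ n)%R by (apply pow_le; lra). assert (r ^ (m - n) <= 1)%R by (apply pow_le_one; lra).
 assert (0 <= r ^ (m-n))%R by (apply pow_le; lra). nra. Qed.

Definition cv (u : nat -> C) (l : C) := forall eps, (0 < eps)%R -> exists N, forall n, (N <= n)%nat -> (Cmod (u n - l) < eps)%R.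

Lemma Cmod_small_eq a : (forall eps, 0 < eps -> Cmod a < eps)%R -> a = 0.
Proof. intros H. apply Cmod_eq_0. destruct (Rle_lt_or_eq_dec 0 (Cmod a) (Cmod_ge_0 a)) as [h|h]; auto.
 specialize (H _ h). lra. Qed.

Lemma cv_unique u l1 l2 : cv u l1 -> cv u l2 -> l1 = l2.
Proof. intros H1 H2. assert (l1 - l2 = 0).
 { apply Cmod_small_eq. intros eps He. destruct (H1 (eps/2)%R) as [N1 HN1]. lra.
   destruct (H2 (eps/2)%R) as [N2 HN2]. lra.
   specialize (HN1 (N1+N2)%nat ltac:(lia)). specialize (HN2 (N1+N2)%nat ltac:(lia)).
   replace (l1 - l2) with ((u (N1+N2)%nat - l2) + - (u (N1+N2)%nat - l1)) by ring.
   eapply Rle_lt_trans. apply Cmod_triangle. rewrite Cmod_opp. lra. }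
 replace l1 with ((l1 - l2) + l2) by ring. rewrite H. ring. Qed.

Lemma cv_const c : cv (fun _ => c) c.
Proof. intros eps He. exists 0%nat. intros. replace (c - c) with (RtoC 0) by ring. rewrite Cmod_0. auto. Qed.

Lemma cv_ext_ev u w l : (exists N, forall n, (N <= n)%nat -> u n = w n) -> cv u l -> cv w l.
Proof. intros [N0 HN0] H eps He. destruct (H eps He) as [N HN]. exists (N + N0)%nat. intros n Hn.
 rewrite <- HN0 by lia. apply HN. lia. Qed.

Lemma cv_ext u w l : (forall n, u n = w n) -> cv u l -> cv w l.
Proof. intros E. apply cv_ext_ev. exists 0%nat; auto. Qed.

Lemma cv_sub u g l : (forall M, exists N, forall n, (N <= n)%nat -> (M <= g n)%nat) -> cv u l -> cv (fun n => u (g n)) l.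
Proof. intros Hg H eps He. destruct (H eps He) as [N HN]. destruct (Hg N) as [N' HN'].
 exists N'. intros n Hn. apply HN. auto. Qed.

Lemma cv_plus u w a b : cv u a -> cv w b -> cv (fun n => u n + w n) (a + b).
Proof. intros Hu Hw eps He. destruct (Hu (eps/2)%R) as [N1 H1]. lra. destruct (Hw (eps/2)%R) as [N2 H2]. lra.
 exists (N1+N2)%nat. intros n Hn. replace (u n + w n - (a + b)) with ((u n - a) + (w n - b)) by ring.
 eapply Rle_lt_trans. apply Cmod_triangle. specialize (H1 n ltac:(lia)). specialize (H2 n ltac:(lia)). lra. Qed.

Lemma cv_bounded u l : cv u l -> exists B, (0 <= B)%R /\ forall n, (Cmod (u n) <= B)%R.
Proof. intros H. destruct (H 1%R) as [N HN]. lra.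
 exists (sumR (fun k => Cmod (u k)) N + Cmod l + 1)%R. split.
 { assert (0 <= sumR (fun k => Cmod (u k)) N)%R by (apply sumR_nonneg; intros; apply Cmod_ge_0).
   assert (0 <= Cmod l)%R by apply Cmod_ge_0. lra. }
 intros n. destruct (le_lt_dec N n) as [h|h].
 - specialize (HN n h). assert (Cmod (u n) <= Cmod (u n - l) + Cmod l)%R.
   { replace (u n) with ((u n - l) + l) at 1 by ring. apply Cmod_triangle. }
   assert (0 <= sumR (fun k => Cmod (u k)) N)%R by (apply sumR_nonneg; intros; apply Cmod_ge_0). lra.
 - assert (Cmod (u n) <= sumR (fun k => Cmod (u k)) N)%R.
   { clear HN. induction N. lia. simpl. destruct (Nat.eq_dec n N). subst.
     assert (0 <= sumR (fun k => Cmod (u k)) N)%R by (apply sumR_nonneg; intros; apply Cmod_ge_0). lra.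
     assert (Cmod (u n) <= sumR (fun k => Cmod (u k)) N)%R by (apply IHN; lia).
     assert (0 <= Cmod (u N))%R by apply Cmod_ge_0. lra. }
   assert (0 <= Cmod l)%R by apply Cmod_ge_0. lra. Qed.

Lemma aux_half B eps : (0 <= B)%R -> (0 < eps)%R -> (B * (eps / (2 * (B + 1))) < eps/2)%R.
Proof. intros. apply Rmult_lt_reg_r with (2*(B+1))%R. lra.
 replace (B * (eps / (2 * (B + 1))) * (2 * (B + 1)))%R with (B*eps)%R by (field; lra).
 replace (eps / 2 * (2 * (B + 1)))%R with (eps * B + eps)%R by (field; lra). nra. Qed.

Lemma cv_mult u w a b : cv u a -> cv w b -> cv (fun n => u n * w n) (a * b).
Proof. intros Hu Hw eps He. destruct (cv_bounded u a Hu) as [B [HB0 HB]].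
 assert (Hb0 : (0 <= Cmod b)%R) by apply Cmod_ge_0.
 destruct (Hu (eps/(2*(Cmod b + 1)))%R) as [N1 H1]. apply Rdiv_lt_0_compat; lra.
 destruct (Hw (eps/(2*(B + 1)))%R) as [N2 H2]. apply Rdiv_lt_0_compat; lra.
 exists (N1+N2)%nat. intros n Hn. specialize (H1 n ltac:(lia)). specialize (H2 n ltac:(lia)).
 replace (u n * w n - a * b) with (u n * (w n - b) + b * (u n - a)) by ring.
 eapply Rle_lt_trans. apply Cmod_triangle. rewrite !Cmod_mult.
 assert (Cmod (u n) * Cmod (w n - b) <= B * (eps / (2 * (B + 1))))%R.
 { apply Rmult_le_compat; try apply Cmod_ge_0; auto. lra. }
 assert (Cmod b * Cmod (u n - a) <= Cmod b * (eps / (2 * (Cmod b + 1))))%R.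
 { apply Rmult_le_compat_l; auto. lra. }
 assert (B * (eps / (2 * (B + 1))) < eps/2)%R.
 { apply aux_half; auto. }
 assert (Cmod b * (eps / (2 * (Cmod b + 1))) < eps/2)%R.
 { apply aux_half; auto. }
 lra. Qed.

Lemma cv_scal c u a : cv u a -> cv (fun n => c * u n) (c * a).
Proof. intros H. apply (cv_mult (fun _ => c) u). apply cv_const. auto. Qed.

Lemma cv_opp u a : cv u a -> cv (fun n => - u n) (- a).
Proof. intros H. apply (cv_ext (fun n => (-1) * u n)). intros; ring.
 replace (-a) with ((-1) * a) by ring. apply cv_scal; auto. Qed.

Lemma cv_minus u w a b : cv u a -> cv w b -> cv (fun n => u n - w n) (a - b).
Proof. intros H1 H2. apply (cv_ext (fun n => u n + - w n)). intros; reflexivity. apply cv_plus; auto. apply cv_opp; auto. Qed.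

Lemma cv_inv (u : nat -> C) (a : C) : a <> 0 -> cv u a -> cv (fun n => / u n) (/ a).
Proof. intros Ha H eps He. assert (Hma : (0 < Cmod a)%R) by (apply (proj1 (Cmod_gt_0 _)); auto).
 destruct (H (Cmod a / 2)%R) as [N1 H1]. lra.
 destruct (H (eps * (Cmod a * Cmod a) / 2)%R) as [N2 H2].
 { apply Rdiv_lt_0_compat; try lra. apply Rmult_lt_0_compat; nra. }
 exists (N1+N2)%nat. intros n Hn. specialize (H1 n ltac:(lia)). specialize (H2 n ltac:(lia)).
 assert (Hun : (Cmod a / 2 <= Cmod (u n))%R).
 { assert (H3 := Cmod_sub_ge a (a - u n)). replace (a - (a - u n)) with (u n) in H3 by ring.
   replace (a - u n) with (- (u n - a)) in H3 by ring. rewrite Cmod_opp in H3. lra. }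
 assert (Hu0 : u n <> 0). { intros E. rewrite E, Cmod_0 in Hun. lra. }
 replace (/ u n - / a) with ((a - u n) / (u n * a)) by (field; auto).
 rewrite Cmod_div by (apply Cmult_neq_0; auto). rewrite Cmod_mult.
 replace (a - u n) with (- (u n - a)) by ring. rewrite Cmod_opp.
 apply Rmult_lt_reg_r with (Cmod (u n) * Cmod a)%R. apply Rmult_lt_0_compat; lra.
 unfold Rdiv. rewrite Rmult_assoc, Rinv_l. 2: { apply Rgt_not_eq. apply Rmult_lt_0_compat; lra. }
 rewrite Rmult_1_r. assert (eps * (Cmod a * Cmod a) / 2 <= eps * (Cmod (u n) * Cmod a))%R.
 { unfold Rdiv. rewrite Rmult_assoc. apply Rmult_le_compat_l. lra. nra. }
 unfold Rdiv in H2. lra. Qed.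

Lemma cv_div (u w : nat -> C) (a b : C) : b <> 0 -> cv u a -> cv w b -> cv (fun n => u n / w n) (a / b).
Proof. intros. apply cv_mult; auto. apply cv_inv; auto. Qed.

Lemma cv_le u l c T : cv u l -> (exists N, forall n, (N <= n)%nat -> (Cmod (u n - c) <= T)%R) -> (Cmod (l - c) <= T)%R.
Proof. intros H [N HN]. apply Rnot_lt_le. intros Hlt.
 destruct (H (Cmod (l - c) - T)%R) as [N1 H1]. lra.
 specialize (H1 (N+N1)%nat ltac:(lia)). specialize (HN (N+N1)%nat ltac:(lia)).
 assert (H3 := Cmod_triangle (u (N+N1)%nat - c) (-(u (N+N1)%nat - l))).
 replace (u (N + N1)%nat - c + - (u (N + N1)%nat - l)) with (l - c) in H3 by ring.
 rewrite Cmod_opp in H3. lra. Qed.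

Lemma cv_filterlim u l : cv u l -> filterlim u eventually (locally l).
Proof. intros H. apply filterlim_locally. intros eps. destruct (H eps (cond_pos eps)) as [N HN].
 exists N. intros n Hn. apply C_NormedModule_mixin_compat1. apply HN. lia. Qed.

Lemma C_cauchy_cv u : (forall eps, (0 < eps)%R -> exists N, forall n m, (N <= n)%nat -> (N <= m)%nat -> (Cmod (u n - u m) < eps)%R) -> exists l, cv u l.
Proof. intros H.
 assert (Hre : Cauchy_crit (fun n => Re (u n))).
 { intros eps He. destruct (H eps He) as [N HN]. exists N. intros n m Hn Hm. unfold Rdist.
   eapply Rle_lt_trans. 2: apply (HN n m); lia. eapply Rle_trans. 2: apply Rmax_Cmod.
   simpl. apply Rle_trans with (Rabs (fst (u n) - fst (u m)))%R. right; reflexivity. apply Rmax_l. }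
 assert (Him : Cauchy_crit (fun n => Im (u n))).
 { intros eps He. destruct (H eps He) as [N HN]. exists N. intros n m Hn Hm. unfold Rdist.
   eapply Rle_lt_trans. 2: apply (HN n m); lia. eapply Rle_trans. 2: apply Rmax_Cmod.
   simpl. apply Rle_trans with (Rabs (snd (u n) - snd (u m)))%R. right; reflexivity. apply Rmax_r. }
 destruct (Rcomplete.R_complete _ Hre) as [lr Hlr]. destruct (Rcomplete.R_complete _ Him) as [li Hli].
 exists (lr, li). intros eps He.
 destruct (Hlr (eps/2)%R) as [N1 H1]. lra. destruct (Hli (eps/2)%R) as [N2 H2]. lra.
 exists (N1+N2)%nat. intros n Hn. specialize (H1 n ltac:(lia)). specialize (H2 n ltac:(lia)).
 unfold Rdist in *. eapply Rle_lt_trans. apply Cmod_2Rmax.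
 assert (sqrt 2 < 2)%R. { rewrite <- (sqrt_square 2) at 2 by lra. apply sqrt_lt_1; lra. }
 assert (0 <= sqrt 2)%R by apply sqrt_pos.
 assert (Rmax (Rabs (fst ((u n - (lr, li))%C))) (Rabs (snd ((u n - (lr, li))%C))) < eps/2)%R.
 { apply Rmax_lub_lt; simpl; [ replace (fst (u n) + - lr)%R with (Re (u n) - lr)%R by reflexivity
   | replace (snd (u n) + - li)%R with (Im (u n) - li)%R by reflexivity]; auto. }
 assert (0 <= Rmax (Rabs (fst ((u n - (lr, li))%C))) (Rabs (snd ((u n - (lr, li))%C))))%R.
 { eapply Rle_trans. apply Rabs_pos. apply Rmax_l. }
 nra. Qed.

Lemma pow_small r : (0 <= r < 1)%R -> forall eps, (0 < eps)%R -> exists N, forall n, (N <= n)%nat -> (r ^ n < eps)%R.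
Proof. intros Hr eps He. destruct (pow_lt_1_zero r ltac:(rewrite Rabs_pos_eq; lra) eps He) as [N HN].
 exists N. intros n Hn. specialize (HN n Hn). rewrite Rabs_pos_eq in HN; auto. apply pow_le; lra. Qed.

Lemma geom_diff u K r : (0 <= K)%R -> (0 <= r < 1)%R -> (forall n, Cmod (u (S n) - u n) <= K * r ^ n)%R ->
  forall n m, (n <= m)%nat -> (Cmod (u m - u n) <= K * r ^ n / (1 - r))%R.
Proof. intros HK Hr H n m Hnm. replace m with (n + (m - n))%nat by lia. generalize (m - n)%nat as k. intros k.
 assert (Hs : (Cmod (u (n+k)%nat - u n) <= K * r ^ n * (1 - r ^ k) / (1 - r))%R).
 { induction k. rewrite Nat.add_0_r. replace (u n - u n) with (RtoC 0) by ring. rewrite Cmod_0. simpl.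
   replace (K * r ^ n * (1 - 1) / (1 - r))%R with 0%R by (field; lra). lra.
   rewrite Nat.add_succ_r. replace (u (S (n+k)) - u n) with ((u (S (n+k)) - u (n+k)%nat) + (u (n+k)%nat - u n)) by ring.
   eapply Rle_trans. apply Cmod_triangle. specialize (H (n+k)%nat). rewrite pow_add in H.
   replace (K * r ^ n * (1 - r ^ S k) / (1 - r))%R with (K * r ^ n * (1 - r ^ k) / (1 - r) + K * (r ^ n * r ^ k))%R.
   lra. simpl. field. lra. }
 eapply Rle_trans. apply Hs. unfold Rdiv. apply Rmult_le_compat_r. apply Rlt_le, Rinv_0_lt_compat; lra.
 assert (0 <= r ^ k)%R by (apply pow_le; lra). assert (0 <= r ^ n)%R by (apply pow_le; lra).
 assert (0 <= K * r ^ n * r ^ k)%R by (apply Rmult_le_pos; [apply Rmult_le_pos|]; auto). lra. Qed.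

Lemma geom_cv u K r : (0 <= K)%R -> (0 <= r < 1)%R -> (forall n, Cmod (u (S n) - u n) <= K * r ^ n)%R ->
  exists l, cv u l /\ forall n, (Cmod (l - u n) <= K * r ^ n / (1 - r))%R.
Proof. intros HK Hr H. assert (HD := geom_diff u K r HK Hr H).
 destruct (C_cauchy_cv u) as [l Hl].
 { intros eps He. destruct (pow_small r Hr (eps * (1 - r) / (K + 1))%R) as [N HN].
   { apply Rdiv_lt_0_compat. apply Rmult_lt_0_compat; lra. lra. }
   exists N. intros n m Hn Hm.
   assert (Hab2 : forall a b, (N <= a <= b)%nat -> (Cmod (u b - u a) < eps)%R).
   { intros a b Hab. eapply Rle_lt_trans. apply HD. lia. specialize (HN a ltac:(lia)).
     apply Rmult_lt_reg_r with (1 - r)%R. lra. unfold Rdiv. rewrite Rmult_assoc, Rinv_l by lra.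
     rewrite Rmult_1_r. assert (0 <= r ^ a)%R by (apply pow_le; lra).
     assert (r ^ a * (K + 1) < eps * (1 - r))%R.
     { apply Rmult_lt_reg_r with (/ (K+1))%R. apply Rinv_0_lt_compat; lra.
       rewrite Rmult_assoc, Rinv_r by lra. rewrite Rmult_1_r. auto. }
     nra. }
   destruct (le_lt_dec n m) as [hnm|hnm]. replace (u n - u m) with (- (u m - u n)) by ring.
   rewrite Cmod_opp. apply Hab2; lia. apply Hab2; lia. }
 exists l. split; auto. intros n. apply cv_le with (u := u). auto. exists n. intros m Hm.
 replace (u m - u n) with (u m - u n) by ring. apply HD; auto. Qed.

Lemma series_geom f K r : (0 <= K)%R -> (0 <= r < 1)%R -> (forall n, Cmod (f n) <= K * r ^ n)%R ->
  exists l, cv (sumC f) l /\ forall n, (Cmod (l - sumC f n) <= K * r ^ n / (1 - r))%R.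
Proof. intros HK Hr H. apply geom_cv; auto. intros n. simpl. replace (sumC f n + f n - sumC f n) with (f n) by ring. auto. Qed.

Lemma sumC_tail f K r n m : (0 <= K)%R -> (0 <= r < 1)%R -> (forall n, Cmod (f n) <= K * r ^ n)%R -> (n <= m)%nat ->
  (Cmod (sumC f m - sumC f n) <= K * r ^ n / (1 - r))%R.
Proof. intros HK Hr H Hnm. apply geom_diff; auto. intros k. simpl. replace (sumC f k + f k - sumC f k) with (f k) by ring. auto. Qed.

Lemma exp_mono a b : (a <= b)%R -> (exp a <= exp b)%R.
Proof. intros H. destruct (Rle_lt_or_eq_dec _ _ H). left; apply exp_increasing; auto. subst; lra. Qed.

Lemma prod_cv f K r : (0 <= K)%R -> (0 <= r < 1)%R -> (forall n, Cmod (f n - 1) <= K * r ^ n)%R ->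
  exists L, cv (prodC f) L.
Proof. intros HK Hr H. set (E := exp (K / (1 - r))).
 assert (HP : forall n, (Cmod (prodC f n) <= exp (sumR (fun i => K * r ^ i) n))%R).
 { induction n; simpl. rewrite Cmod_1, exp_0. lra. rewrite Cmod_mult, exp_plus.
   assert (Cmod (f n) <= 1 + K * r ^ n)%R.
   { replace (f n) with ((f n - 1) + 1) by ring. eapply Rle_trans. apply Cmod_triangle. rewrite Cmod_1. specialize (H n). lra. }
   apply Rmult_le_compat; try apply Cmod_ge_0; auto. eapply Rle_trans. apply H0. apply exp_ineq1_le. }
 assert (HE : forall n, (Cmod (prodC f n) <= E)%R).
 { intros n. eapply Rle_trans. apply HP. apply exp_mono. apply geom_sumR_le; auto. }
 assert (0 <= E)%R by (unfold E; left; apply exp_pos).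
 destruct (geom_cv (prodC f) (E * K) r) as [L [HL _]]; auto. apply Rmult_le_pos; auto.
 - intros n. simpl. replace (prodC f n * f n - prodC f n) with (prodC f n * (f n - 1)) by ring.
   rewrite Cmod_mult. rewrite Rmult_assoc. apply Rmult_le_compat; try apply Cmod_ge_0; auto.
 - exists L; auto. Qed.

Lemma prod_cv_nz f K r d : (0 <= K)%R -> (0 <= r < 1)%R -> (0 < d)%R -> (forall n, Cmod (f n - 1) <= K * r ^ n)%R ->
  (forall n, d <= Cmod (f n))%R -> exists L : C, L <> 0 /\ cv (prodC f) L.
Proof. intros HK Hr Hd H1 H2.
 assert (Hnz : forall n, f n <> 0). { intros n E. specialize (H2 n). rewrite E, Cmod_0 in H2. lra. }
 destruct (prod_cv f K r HK Hr H1) as [L HL].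
 destruct (prod_cv (fun n => / f n) (K / d) r) as [L' HL'].
 { apply Rdiv_le_0_compat; lra. } auto.
 { intros n. replace (/ f n - 1) with (- (f n - 1) / f n) by (field; auto).
   rewrite Cmod_div, Cmod_opp by auto. unfold Rdiv. rewrite Rmult_comm, (Rmult_comm K).
   rewrite Rmult_assoc. apply Rmult_le_compat. left; apply Rinv_0_lt_compat; apply (proj1 (Cmod_gt_0 _)); auto. apply Cmod_ge_0.
   apply Rinv_le_contravar; auto. auto. }
 exists L. split; auto. intros E.
 assert (Hc := cv_mult _ _ _ _ HL HL'). assert (Hone : cv (fun n => prodC f n * prodC (fun n0 => / f n0) n) 1).
 { apply (cv_ext (fun _ => RtoC 1)). intros n. rewrite <- prodC_mult. rewrite (prodC_ext _ (fun _ => RtoC 1)). rewrite prodC_one; auto.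
   intros; field; auto. apply cv_const. }
 assert (L * L' = 1) by (eapply cv_unique; eauto). rewrite E in H. 
 assert (0 = 1 :> C) by (rewrite <- H; ring). apply C1_nz. auto. Qed.

Lemma prod_simple w c : (Cmod w < 1)%R -> (forall j, Cmod (c j) <= Cmod w ^ (S j))%R ->
  exists L : C, L <> 0 /\ cv (prodC (fun j => 1 + c j)) L.
Proof. intros Hw Hc. assert (0 <= Cmod w)%R by apply Cmod_ge_0.
 apply (prod_cv_nz _ (Cmod w) (Cmod w) (1 - Cmod w)); auto; try lra.
 - intros n. replace (1 + c n - 1) with (c n) by ring. apply Hc.
 - intros n. eapply Rle_trans. 2: apply Cmod_ge_1m. specialize (Hc n). simpl in Hc.
   assert (Cmod w ^ n <= 1)%R by (apply pow_le_one; lra). assert (0 <= Cmod w ^ n)%R by (apply pow_le; lra). nra. Qed.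


Lemma cv_sumC_fin (a : nat -> nat -> C) (b : nat -> C) m : (forall k, cv (fun n => a n k) (b k)) ->
  cv (fun n => sumC (a n) m) (sumC b m).
Proof. intros H. induction m; simpl. apply cv_const. apply cv_plus; auto. Qed.

Lemma tannery (a : nat -> nat -> C) (b : nat -> C) (g : nat -> nat) K r :
  (0 <= K)%R -> (0 <= r < 1)%R -> (forall n k, Cmod (a n k) <= K * r ^ k)%R ->
  (forall k, cv (fun n => a n k) (b k)) -> (forall M, exists N, forall n, (N <= n)%nat -> (M <= g n)%nat) ->
  exists l, cv (sumC b) l /\ cv (fun n => sumC (a n) (g n)) l.
Proof. intros HK Hr Ha Hab Hg.
 assert (Hb : forall k, (Cmod (b k) <= K * r ^ k)%R).
 { intros k. replace (b k) with (b k - 0) by ring. apply (cv_le (fun n => a n k)); auto.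
   exists 0%nat. intros. replace (a n k - 0) with (a n k) by ring. auto. }
 destruct (series_geom b K r HK Hr Hb) as [l [Hl Htail]].
 exists l. split; auto. intros eps He.
 destruct (pow_small r Hr (eps * (1 - r) / (3 * (K + 1)))%R) as [K0 HK0].
 { apply Rdiv_lt_0_compat. apply Rmult_lt_0_compat; lra. lra. }
 assert (HT : (K * r ^ K0 / (1 - r) < eps / 3)%R).
 { specialize (HK0 K0 (le_n _)). assert (0 <= r ^ K0)%R by (apply pow_le; lra).
   apply Rmult_lt_reg_r with (3 * (1 - r) * / (K+1))%R.
   apply Rmult_lt_0_compat. lra. apply Rinv_0_lt_compat; lra.
   replace (K * r ^ K0 / (1 - r) * (3 * (1 - r) * / (K + 1)))%R with (3 * r ^ K0 * (K / (K+1)))%R by (field; lra).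
   replace (eps / 3 * (3 * (1 - r) * / (K + 1)))%R with (eps * (1 - r) / (K+1))%R by (field; lra).
   assert (K / (K+1) < 1)%R. { apply Rmult_lt_reg_r with (K+1)%R. lra. unfold Rdiv. rewrite Rmult_assoc, Rinv_l by lra. lra. }
   assert (0 <= K / (K+1))%R by (apply Rdiv_le_0_compat; lra).
   assert (3 * r ^ K0 < eps * (1 - r) / (K+1))%R.
   { replace (eps * (1 - r) / (K + 1))%R with (3 * (eps * (1 - r) / (3 * (K + 1))))%R by (field; lra). lra. }
   assert (3 * r ^ K0 * (K / (K + 1)) <= 3 * r ^ K0)%R. { assert (0 <= 3 * r ^ K0)%R by lra. nra. }
   lra. }
 destruct (cv_sumC_fin a b K0 Hab (eps/3)%R) as [N1 HN1]. lra.
 destruct (Hg K0) as [N2 HN2].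
 exists (N1 + N2)%nat. intros n Hn. specialize (HN1 n ltac:(lia)). specialize (HN2 n ltac:(lia)).
 replace (sumC (a n) (g n) - l) with ((sumC (a n) (g n) - sumC (a n) K0) + (sumC (a n) K0 - sumC b K0) + - (l - sumC b K0)) by ring.
 eapply Rle_lt_trans. apply Cmod_triangle. rewrite Cmod_opp.
 assert (H1 := Cmod_triangle (sumC (a n) (g n) - sumC (a n) K0) (sumC (a n) K0 - sumC b K0)).
 assert (H2 := sumC_tail (a n) K r K0 (g n) HK Hr (Ha n) HN2).
 specialize (Htail K0). lra. Qed.

Lemma sumR_ge_term f J j : (forall k, 0 <= f k)%R -> (j < J)%nat -> (f j <= sumR f J)%R.
Proof. intros H Hj. induction J. lia. simpl. destruct (Nat.eq_dec j J). subst.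
 assert (0 <= sumR f J)%R by (apply sumR_nonneg; auto). lra.
 assert (f j <= sumR f J)%R by (apply IHJ; lia). specialize (H J). lra. Qed.

Lemma superexp a R : (0 <= a < 1)%R -> (0 <= R)%R -> exists K, (0 <= K)%R /\ forall j, (a ^ (j*j) * R ^ j <= K * (1/2) ^ j)%R.
Proof. intros Ha HR. destruct (pow_small a Ha (/ (2 * (R+1)))%R) as [J HJ]. apply Rinv_0_lt_compat; lra.
 set (t := fun j => (a ^ (j*j) * R ^ j * 2 ^ j)%R).
 assert (Ht : forall j, (0 <= t j)%R). { intros j. unfold t. apply Rmult_le_pos; [apply Rmult_le_pos|]; apply pow_le; lra. }
 exists (sumR t J + 1)%R. split. assert (0 <= sumR t J)%R by (apply sumR_nonneg; auto). lra.
 intros j. destruct (le_lt_dec J j) as [h|h].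
 - assert (0 <= sumR t J)%R by (apply sumR_nonneg; auto).
   rewrite pow_mult. rewrite <- Rpow_mult_distr.
   assert (a ^ j * R <= 1/2)%R.
   { specialize (HJ j h). assert (0 <= a ^ j)%R by (apply pow_le; lra).
     assert (a ^ j * R <= / (2 * (R+1)) * R)%R by (apply Rmult_le_compat_r; lra).
     assert (/ (2 * (R + 1)) * R <= 1/2)%R.
     { apply Rmult_le_reg_r with (2 * (R+1))%R. lra. rewrite Rmult_comm, <- Rmult_assoc, Rinv_r by lra. lra. }
     lra. }
   assert ((a ^ j * R) ^ j <= (1/2) ^ j)%R. { apply pow_incr. split; auto. apply Rmult_le_pos; auto. apply pow_le; lra. }
   assert (0 <= (1/2) ^ j)%R by (apply pow_le; lra). nra.
 - assert (t j <= sumR t J)%R by (apply sumR_ge_term; auto).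
   assert (Hp : ((1/2) ^ j * 2 ^ j = 1)%R). { rewrite <- Rpow_mult_distr. replace (1/2*2)%R with 1%R by field. apply pow1. }
   assert (0 < 2 ^ j)%R by (apply pow_lt; lra).
   assert (0 <= (1/2) ^ j)%R by (apply pow_le; lra).
   apply Rmult_le_reg_r with (2 ^ j)%R; auto. rewrite (Rmult_assoc (sumR t J + 1)), Hp. change (a ^ (j * j) * R ^ j * 2 ^ j)%R with (t j). lra. Qed.


Fixpoint G (p : C) (m k : nat) : C :=
  match m, k with
  | _, O => 1
  | O, S _ => 0
  | S m', S k' => G p m' k' + p ^ (S k') * G p m' (S k')
  end.

Fixpoint tri (k : nat) : nat := match k with O => O | S k' => (tri k' + k')%nat end.
Lemma tri_eq k : (2 * tri k + k = k * k)%nat.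
Proof. induction k; simpl; lia. Qed.

Lemma G_m0 (p : C) m : G p m 0 = 1.
Proof. destruct m; reflexivity. Qed.
Lemma G_zero (p : C) m k : (m < k)%nat -> G p m k = 0.
Proof. revert k; induction m; intros k Hk; destruct k; try lia; simpl. reflexivity.
 rewrite !IHm by lia. ring. Qed.

Lemma gauss (p : C) m (y : C) : prodC (fun j => 1 + y * p ^ j) m = sumC (fun k => G p m k * p ^ (tri k) * y ^ k) (S m).
Proof. revert y; induction m; intros y.
 - simpl. ring.
 - rewrite prodC_front. rewrite (prodC_ext _ (fun j => 1 + (y * p) * p ^ j)).
   2: { intros k _. simpl. ring. }
   rewrite IHm. rewrite (sumC_front _ (S m)).
   set (c := fun k => G p m k * p ^ (tri k + k) * y ^ k).
   assert (E1 : sumC (fun k => G p (S m) (S k) * p ^ tri (S k) * y ^ S k) (S m) =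
               sumC (fun k => y * (G p m k * p ^ tri k * (y * p) ^ k)) (S m) + sumC (fun k => c (S k)) (S m)).
   { rewrite <- sumC_plus. apply sumC_ext. intros k _. unfold c. simpl G. simpl tri.
     rewrite !Cpow_add_r, !Cpow_mult_l. simpl. ring. }
   rewrite E1. clear E1.
   assert (E2 : sumC (fun k => G p m k * p ^ tri k * (y * p) ^ k) (S m) = sumC c (S m)).
   { apply sumC_ext. intros k _. unfold c. rewrite Cpow_add_r, Cpow_mult_l. ring. }
   assert (E3 : sumC c (S m) = 1 + sumC (fun k => c (S k)) (S m)).
   { rewrite sumC_front. change (sumC (fun k => c (S k)) (S m)) with (sumC (fun k => c (S k)) m + c (S m)).
     assert (Hc0 : c 0%nat = 1) by (unfold c; rewrite G_m0; simpl; ring).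
     assert (Hcm : c (S m) = 0) by (unfold c; rewrite G_zero by lia; ring).
     rewrite Hc0, Hcm. ring. }
   rewrite G_m0. simpl Cpow. rewrite Cmult_plus_distr_r, sumC_scal. rewrite E2, E3. ring. Qed.

Definition Pq (p : C) (m : nat) : C := prodC (fun i => 1 - p ^ (S i)) m.

Lemma G_closed (p : C) m k : (k <= m)%nat -> G p m k * Pq p k * Pq p (m - k) = Pq p m.
Proof. revert k; induction m; intros k Hk.
 - destruct k; [|lia]. simpl. unfold Pq. simpl. ring.
 - destruct k. rewrite G_m0. unfold Pq at 1. simpl. ring.
   change (G p (S m) (S k)) with (G p m k + p ^ (S k) * G p m (S k)). replace (S m - S k)%nat with (m - k)%nat by lia.
   assert (HP : Pq p (S k) = Pq p k * (1 - p ^ S k)) by reflexivity. rewrite HP.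
   destruct (Nat.eq_dec k m) as [e|ne].
   + subst. rewrite (G_zero p m (S m)) by lia. replace (m - m)%nat with 0%nat by lia.
     assert (IH := IHm m (le_n _)). replace (m - m)%nat with 0%nat in IH by lia.
     change (Pq p 0) with (RtoC 1) in *. change (Pq p (S m)) with (Pq p m * (1 - p ^ S m)).
     transitivity ((G p m m * Pq p m * 1) * (1 - p ^ S m)). ring. rewrite IH. ring.
   + assert (IH1 := IHm k ltac:(lia)). assert (IH2 := IHm (S k) ltac:(lia)).
     replace (m - k)%nat with (S (m - S k)) by lia. replace (m - k)%nat with (S (m - S k)) in IH1 by lia.
     change (Pq p (S (m - S k))) with (Pq p (m - S k) * (1 - p ^ S (m - S k))) in *.
     change (Pq p (S m)) with (Pq p m * (1 - p ^ S m)).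
     rewrite HP in IH2.
     assert (Ep : p ^ S k * p ^ S (m - S k) = p ^ S m).
     { rewrite <- Cpow_add_r. f_equal. lia. }
     transitivity (G p m k * Pq p k * (Pq p (m - S k) * (1 - p ^ S (m - S k))) * (1 - p ^ S k)
        + p ^ S k * (G p m (S k) * (Pq p k * (1 - p ^ S k)) * Pq p (m - S k)) * (1 - p ^ S (m - S k))).
     ring. rewrite IH1, IH2. rewrite <- Ep. ring. Qed.

Lemma prodC_S f n : prodC f (S n) = prodC f n * f n.
Proof. reflexivity. Qed.
Lemma sumC_S f n : sumC f (S n) = sumC f n + f n.
Proof. reflexivity. Qed.

Lemma prodC_nz (f : nat -> C) n : (forall i, f i <> 0) -> prodC f n <> 0.
Proof. intros H; induction n; simpl. apply C1_nz. apply Cmult_neq_0; [exact IHn | apply H]. Qed.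

Lemma Cpow_div (a b : C) n : b <> 0 -> (a / b) ^ n = a ^ n / b ^ n.
Proof. intros Hb. unfold Cdiv. rewrite Cpow_mult_l, Cpow_inv; auto. Qed.

Section FJTP.
Variables (q z : C).
Hypothesis (Hq : q <> 0) (Hz : z <> 0).
Let p := q * q.
Let Hp : p <> 0. Proof. unfold p. apply Cmult_neq_0; auto. Qed.

Definition HH n (y : C) := prodC (fun j => 1 + y * p ^ j) (2 * n).
Definition FF n := prodC (fun i => (1 + z * q ^ (2 * i + 1)) * (1 + / z * q ^ (2 * i + 1))) n.
Definition yn n := z * q / p ^ n.

Lemma HH_step n (y : C) : HH (S n) (y / p) = (1 + y / p) * HH n y * (1 + y * p ^ (2 * n)).
Proof. unfold HH. replace (2 * S n)%nat with (S (S (2 * n))) by lia. rewrite prodC_front.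
 rewrite (prodC_ext (fun k => 1 + y / p * p ^ S k) (fun j => 1 + y * p ^ j)) by (intros k _; rewrite Cpow_S; field; exact Hp).
 change (prodC (fun j => 1 + y * p ^ j) (S (2 * n))) with (prodC (fun j => 1 + y * p ^ j) (2 * n) * (1 + y * p ^ (2 * n))).
 change (p ^ 0) with (RtoC 1). ring. Qed.

Lemma HH_closed n : HH n (yn n) = z ^ n / q ^ (n * n) * FF n.
Proof. induction n.
 - unfold HH, FF. simpl. field.
 - replace (yn (S n)) with (yn n / p) by (unfold yn; simpl; field; split; auto; apply Cpow_nz; auto).
   rewrite HH_step, IHn. unfold FF. rewrite prodC_S. cbv beta. unfold yn.
   assert (Epn : p ^ n = q ^ n * q ^ n) by (unfold p; apply Cpow_mult_l).
   assert (Ep2n : p ^ (2 * n) = (q ^ n * q ^ n) * (q ^ n * q ^ n)).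
   { replace (2 * n)%nat with (n + n)%nat by lia. rewrite Cpow_add_r, Epn. ring. }
   assert (Eq2 : q ^ (2 * n + 1) = q ^ n * q ^ n * q). { replace (2 * n + 1)%nat with (n + n + 1)%nat by lia. rewrite !Cpow_add_r. simpl. ring. }
   assert (Eqs : q ^ (S n * S n) = q ^ (n * n) * q ^ n * q ^ n * q).
   { replace (S n * S n)%nat with (n * n + n + n + 1)%nat by lia. rewrite !Cpow_add_r. simpl. ring. }
   rewrite Ep2n, Epn, Eq2, Eqs. simpl Cpow.
   assert (q ^ n <> 0) by (apply Cpow_nz; auto). assert (q ^ (n * n) <> 0) by (apply Cpow_nz; auto).
   unfold p. field. repeat split; auto. Qed.

Lemma fjtp n : FF n = sumC (fun j => G p (2 * n) (n - 1 - j) * (q ^ (S j * S j) / z ^ (S j))) n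
                    + sumC (fun j => G p (2 * n) (n + j) * (q ^ (j * j) * z ^ j)) (S n).
Proof.
 assert (E := HH_closed n). unfold HH in E. rewrite gauss in E.
 assert (Hzn : z ^ n <> 0) by (apply Cpow_nz; auto). assert (Hqn : q ^ (n * n) <> 0) by (apply Cpow_nz; auto).
 assert (E' : FF n = q ^ (n * n) / z ^ n * sumC (fun k => G p (2 * n) k * p ^ tri k * yn n ^ k) (S (2 * n))).
 { rewrite E. field. auto. }
 rewrite E'. clear E E'. rewrite <- sumC_scal.
 replace (S (2 * n)) with (n + S n)%nat by lia. rewrite sumC_add. rewrite sumC_rev.
 f_equal; apply sumC_ext; intros j Hj.
 - set (k := (n - 1 - j)%nat). assert (Hk : n = (k + S j)%nat) by (unfold k; lia).
   unfold yn. rewrite Cpow_div by (apply Cpow_nz; auto). rewrite Cpow_mult_l.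
   assert (Hzk : z ^ n = z ^ k * z ^ S j) by (rewrite Hk, Cpow_add_r; auto).
   assert (Hq2 : q ^ (n * n) * p ^ tri k * q ^ k = (p ^ n) ^ k * q ^ (S j * S j)).
   { unfold p. rewrite !Cpow_mult_l, <- !Cpow_mult_r, <- !Cpow_add_r. f_equal.
     assert (T := tri_eq k). rewrite Hk. nia. }
   assert (Hpnk : (p ^ n) ^ k <> 0) by (apply Cpow_nz, Cpow_nz; auto).
   assert (Hzk0 : z ^ k <> 0) by (apply Cpow_nz; auto). assert (Hzj : z ^ S j <> 0) by (apply Cpow_nz; auto).
   rewrite Hzk. transitivity (G p (2 * n) k * (q ^ (n * n) * p ^ tri k * q ^ k) / ((p ^ n) ^ k * z ^ S j)).
   field. auto. rewrite Hq2. field. auto.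
 - set (k := (n + j)%nat).
   unfold yn. rewrite Cpow_div by (apply Cpow_nz; auto). rewrite Cpow_mult_l.
   assert (Hzk : z ^ k = z ^ n * z ^ j) by (unfold k; rewrite Cpow_add_r; auto).
   assert (Hq2 : q ^ (n * n) * p ^ tri k * q ^ k = (p ^ n) ^ k * q ^ (j * j)).
   { unfold p. rewrite !Cpow_mult_l, <- !Cpow_mult_r, <- !Cpow_add_r. f_equal.
     assert (T := tri_eq k). unfold k in *. nia. }
   assert (Hpnk : (p ^ n) ^ k <> 0) by (apply Cpow_nz, Cpow_nz; auto).
   rewrite Hzk. transitivity (G p (2 * n) k * z ^ j * (q ^ (n * n) * p ^ tri k * q ^ k) / ((p ^ n) ^ k)).
   field. auto. rewrite Hq2. field. auto. Qed.

End FJTP.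


Lemma sub_2n : forall M, exists N, forall n, (N <= n)%nat -> (M <= 2 * n)%nat.
Proof. intros M; exists M; intros; lia. Qed.
Lemma sub_plus j : forall M, exists N, forall n, (N <= n)%nat -> (M <= n + j)%nat.
Proof. intros M; exists M; intros; lia. Qed.
Lemma sub_minus j : forall M, exists N, forall n, (N <= n)%nat -> (M <= n - j)%nat.
Proof. intros M; exists (M + j)%nat; intros; lia. Qed.
Lemma sub_id : forall M, exists N, forall n, (N <= n)%nat -> (M <= n)%nat.
Proof. intros M; exists M; intros; lia. Qed.
Lemma sub_S : forall M, exists N, forall n, (N <= n)%nat -> (M <= S n)%nat.
Proof. intros M; exists M; intros; lia. Qed.

Lemma one_minus_pow_nz (p : C) k : (Cmod p < 1)%R -> 1 - p ^ (S k) <> 0.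
Proof. intros Hp E. assert (p ^ S k = 1) by (replace (p ^ S k) with (1 - (1 - p ^ S k)) by ring; rewrite E; ring).
 assert (Cmod (p ^ S k) = 1%R) by (rewrite H; apply Cmod_1). rewrite Cmod_pow in H0.
 assert (0 <= Cmod p)%R by apply Cmod_ge_0.
 assert (Cmod p ^ S k <= Cmod p)%R. { simpl. assert (Cmod p ^ k <= 1)%R by (apply pow_le_one; lra). nra. }
 lra. Qed.

Section JTP.
Variables (q z : C).
Hypothesis (Hq : q <> 0) (Hz : z <> 0) (Hq1 : (Cmod q < 1)%R).
Let p := q * q.
Lemma Hp1 : (Cmod p < 1)%R.
Proof. unfold p. rewrite Cmod_mult. assert (0 <= Cmod q)%R by apply Cmod_ge_0. nra. Qed.

Lemma Pq_cv : exists L : C, L <> 0 /\ cv (Pq p) L.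
Proof. destruct (prod_simple p (fun i => - p ^ S i)) as [L [HL HcvL]]. apply Hp1.
 intros j. rewrite Cmod_opp, Cmod_pow. lra.
 exists L. split; [exact HL | exact HcvL]. Qed.

Lemma Pq_nz n : Pq p n <> 0.
Proof. unfold Pq. apply prodC_nz. intros i. apply one_minus_pow_nz. apply Hp1. Qed.

Lemma G_bound : exists B, (0 <= B)%R /\ forall m k, (Cmod (G p m k) <= B)%R.
Proof. destruct Pq_cv as [L [HL Hcv]].
 destruct (cv_bounded _ _ Hcv) as [B1 [HB1 HB1']].
 destruct (cv_bounded _ _ (cv_inv _ _ HL Hcv)) as [B2 [HB2 HB2']].
 exists (B1 * B2 * B2)%R. split. apply Rmult_le_pos; [apply Rmult_le_pos|]; auto.
 intros m k. destruct (le_lt_dec k m) as [h|h].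
 - assert (E := G_closed p m k h).
   replace (G p m k) with (Pq p m * / Pq p k * / Pq p (m - k)).
   2: { rewrite <- E. field. split; apply Pq_nz. }
   rewrite !Cmod_mult. apply Rmult_le_compat; try apply Cmod_ge_0.
   apply Rmult_le_pos; apply Cmod_ge_0. apply Rmult_le_compat; try apply Cmod_ge_0; auto. auto.
 - rewrite G_zero by auto. rewrite Cmod_0. apply Rmult_le_pos; [apply Rmult_le_pos|]; auto. Qed.

Lemma G_lim1 (L : C) j : L <> 0 -> cv (Pq p) L -> cv (fun N => G p (2 * N) (N + j)) (/ L).
Proof. intros HL Hcv.
 apply (cv_ext_ev (fun N => Pq p (2 * N) * / Pq p (N + j) * / Pq p (N - j))).
 { exists j. intros n Hn. assert (E := G_closed p (2 * n) (n + j) ltac:(lia)).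
   replace (2 * n - (n + j))%nat with (n - j)%nat in E by lia.
   rewrite <- E. field. split; apply Pq_nz. }
 replace (/ L) with (L * / L * / L) by (field; auto).
 apply cv_mult. apply cv_mult.
 apply (cv_sub (Pq p) (fun n => 2 * n)%nat); auto. apply sub_2n.
 apply (cv_sub (fun n => / Pq p n) (fun n => n + j)%nat). apply sub_plus. apply cv_inv; auto.
 apply (cv_sub (fun n => / Pq p n) (fun n => n - j)%nat). apply sub_minus. apply cv_inv; auto. Qed.

Lemma G_lim2 (L : C) j : L <> 0 -> cv (Pq p) L -> cv (fun N => G p (2 * N) (N - 1 - j)) (/ L).
Proof. intros HL Hcv.
 apply (cv_ext_ev (fun N => Pq p (2 * N) * / Pq p (N - 1 - j) * / Pq p (N + 1 + j))).
 { exists (S j). intros n Hn. assert (E := G_closed p (2 * n) (n - 1 - j) ltac:(lia)).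
   replace (2 * n - (n - 1 - j))%nat with (n + 1 + j)%nat in E by lia.
   rewrite <- E. field. split; apply Pq_nz. }
 replace (/ L) with (L * / L * / L) by (field; auto).
 apply cv_mult. apply cv_mult.
 apply (cv_sub (Pq p) (fun n => 2 * n)%nat); auto. apply sub_2n.
 apply (cv_sub (fun n => / Pq p n) (fun n => n - 1 - j)%nat). { intros M; exists (M + 1 + j)%nat; intros; lia. } apply cv_inv; auto.
 apply (cv_sub (fun n => / Pq p n) (fun n => n + 1 + j)%nat). { intros M; exists M; intros; lia. } apply cv_inv; auto. Qed.

Definition Tj j := q ^ (j * j) * z ^ j.
Definition Uj j := q ^ (S j * S j) / z ^ (S j).

Lemma T_bound : exists K, (0 <= K)%R /\ forall j, (Cmod (Tj j) <= K * (1/2) ^ j)%R.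
Proof. destruct (superexp (Cmod q) (Cmod z)) as [K [HK H]]. split; [apply Cmod_ge_0|auto]. apply Cmod_ge_0.
 exists K. split; auto. intros j. unfold Tj. rewrite Cmod_mult, !Cmod_pow. apply H. Qed.

Lemma U_bound : exists K, (0 <= K)%R /\ forall j, (Cmod (Uj j) <= K * (1/2) ^ j)%R.
Proof. assert (Hmz : (0 < Cmod z)%R) by (apply (proj1 (Cmod_gt_0 _)); auto).
 destruct (superexp (Cmod q) (/ Cmod z)) as [K [HK H]]. split; [apply Cmod_ge_0|auto]. left; apply Rinv_0_lt_compat; auto.
 exists K. split; auto. intros j. unfold Uj. rewrite Cmod_div by (apply Cpow_nz; auto). rewrite !Cmod_pow.
 unfold Rdiv. rewrite <- pow_inv. eapply Rle_trans. apply H. apply Rmult_le_compat_l; auto.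
 apply pow_decr; lra || lia. Qed.

Theorem jtp (S1 S2 : C) : cv (sumC Tj) S1 -> cv (sumC Uj) S2 ->
  cv (prodC (fun i => (1 - p ^ (S i)) * ((1 + z * q ^ (2 * i + 1)) * (1 + / z * q ^ (2 * i + 1))))) (S1 + S2).
Proof. intros H1 H2. destruct Pq_cv as [L [HL Hcv]].
 destruct G_bound as [B [HB0 HB]]. destruct T_bound as [KT [HKT HT]]. destruct U_bound as [KU [HKU HU]].
 destruct (tannery (fun N j => G p (2 * N) (N + j) * Tj j) (fun j => / L * Tj j) S (B * KT) (1/2))
   as [l1 [Hl1a Hl1b]].
 { apply Rmult_le_pos; auto. } lra.
 { intros n k. rewrite Cmod_mult. rewrite Rmult_assoc. apply Rmult_le_compat; try apply Cmod_ge_0; auto. }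
 { intros k. apply cv_mult. apply G_lim1; auto. apply cv_const. }
 { apply sub_S. }
 destruct (tannery (fun N j => G p (2 * N) (N - 1 - j) * Uj j) (fun j => / L * Uj j) (fun n => n) (B * KU) (1/2))
   as [l2 [Hl2a Hl2b]].
 { apply Rmult_le_pos; auto. } lra.
 { intros n k. rewrite Cmod_mult. rewrite Rmult_assoc. apply Rmult_le_compat; try apply Cmod_ge_0; auto. }
 { intros k. apply cv_mult. apply G_lim2; auto. apply cv_const. }
 { apply sub_id. }
 assert (E1 : l1 = / L * S1).
 { apply (cv_unique (sumC (fun j => / L * Tj j))); auto. apply (cv_ext (fun n => / L * sumC Tj n)).
   intros; rewrite sumC_scal; auto. apply cv_scal; auto. }
 assert (E2 : l2 = / L * S2).
 { apply (cv_unique (sumC (fun j => / L * Uj j))); auto. apply (cv_ext (fun n => / L * sumC Uj n)).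
   intros; rewrite sumC_scal; auto. apply cv_scal; auto. }
 apply (cv_ext (fun N => Pq p N * FF q z N)).
 { intros N. unfold Pq, FF. rewrite <- prodC_mult. reflexivity. }
 replace (S1 + S2) with (L * (l2 + l1)) by (rewrite E1, E2; field; auto).
 apply cv_mult; auto.
 apply (cv_ext (fun N => sumC (fun j => G p (2 * N) (N - 1 - j) * Uj j) N + sumC (fun j => G p (2 * N) (N + j) * Tj j) (S N))).
 { intros N. rewrite fjtp by auto. reflexivity. }
 apply cv_plus; auto. Qed.

Lemma jtp_ex : exists S1 S2, cv (sumC Tj) S1 /\ cv (sumC Uj) S2.
Proof. destruct T_bound as [KT [HKT HT]]. destruct U_bound as [KU [HKU HU]].
 destruct (series_geom Tj KT (1/2)) as [S1 [H1 _]]; auto. lra.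
 destruct (series_geom Uj KU (1/2)) as [S2 [H2 _]]; auto. lra.
 exists S1, S2; auto. Qed.

End JTP.


Definition sg n : C := (- (1)) ^ n.
Lemma Ci2 : Ci * Ci = - (1). Proof. apply injective_projections; simpl; ring. Qed.
Lemma Ci_even k : Ci ^ (2 * k) = sg k.
Proof. rewrite Cpow_mult_r. unfold sg. f_equal. simpl. rewrite Cmult_1_r. apply Ci2. Qed.
Lemma sg_even k : sg (2 * k) = 1.
Proof. unfold sg. rewrite Cpow_mult_r. replace ((- (1)) ^ 2) with (RtoC 1) by (simpl; ring). apply Cpow_1_l. Qed.
Lemma sg_odd k : sg (2 * k + 1) = - (1).
Proof. unfold sg. rewrite Cpow_add_r. fold (sg (2 * k)). rewrite sg_even. simpl. ring. Qed.
Lemma sg_S k : sg (S k) = - sg k.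
Proof. unfold sg. simpl. ring. Qed.
Lemma sg_sq k : sg k * sg k = 1.
Proof. unfold sg. rewrite <- Cpow_add_r. replace (k + k)%nat with (2 * k)%nat by lia. apply sg_even. Qed.
Lemma L_pp (y : C) a b : (y ^ a) ^ b = y ^ (a * b).
Proof. rewrite Cpow_mult_r; auto. Qed.
Lemma L_neg (y : C) n : (- y) ^ n = sg n * y ^ n.
Proof. unfold sg. rewrite <- Cpow_mult_l. f_equal. ring. Qed.
Lemma L_add (y : C) a b : y ^ a * y ^ b = y ^ (a + b).
Proof. rewrite Cpow_add_r; auto. Qed.

Definition JP (q z : C) N := prodC (fun i => (1 - (q * q) ^ (S i)) * ((1 + z * q ^ (2 * i + 1)) * (1 + / z * q ^ (2 * i + 1)))) N.

Section Facs.
Variable y : C.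
Hypothesis Hy : y <> 0.

Lemma facA i : (1 - ((y^2)^4 * (y^2)^4) ^ (S i)) * ((1 + - ((y^2)^3) * ((y^2)^4) ^ (2 * i + 1)) * (1 + / - ((y^2)^3) * ((y^2)^4) ^ (2 * i + 1)))
  = (1 - y ^ (16 * i + 16)) * ((1 - y ^ (16 * i + 14)) * (1 - y ^ (16 * i + 2))).
Proof. rewrite !L_pp, L_add, !L_pp.
 replace ((2 * 4 + 2 * 4) * S i)%nat with (16 * i + 16)%nat by lia.
 replace (2 * 4 * (2 * i + 1))%nat with (16 * i + 8)%nat by lia. replace (2 * 3)%nat with 6%nat by lia.
 assert (E1 : y ^ 6 * y ^ (16 * i + 8) = y ^ (16 * i + 14)) by (rewrite L_add; f_equal; lia).
 assert (E2 : y ^ (16 * i + 8) = y ^ (16 * i + 2) * y ^ 6) by (rewrite L_add; f_equal; lia).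
 assert (H6 : y ^ 6 <> 0) by (apply Cpow_nz; auto).
 transitivity ((1 - y ^ (16 * i + 16)) * ((1 - y ^ 6 * y ^ (16 * i + 8)) * (1 - y ^ (16 * i + 8) / y ^ 6))).
 field; auto. rewrite E1, E2. field; auto. Qed.

Lemma facB i : (1 - ((y^2)^4 * (y^2)^4) ^ (S i)) * ((1 + - (y^2) * ((y^2)^4) ^ (2 * i + 1)) * (1 + / - (y^2) * ((y^2)^4) ^ (2 * i + 1)))
  = (1 - y ^ (16 * i + 16)) * ((1 - y ^ (16 * i + 10)) * (1 - y ^ (16 * i + 6))).
Proof. rewrite !L_pp, L_add, !L_pp.
 replace ((2 * 4 + 2 * 4) * S i)%nat with (16 * i + 16)%nat by lia.
 replace (2 * 4 * (2 * i + 1))%nat with (16 * i + 8)%nat by lia.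
 assert (E1 : y ^ 2 * y ^ (16 * i + 8) = y ^ (16 * i + 10)) by (rewrite L_add; f_equal; lia).
 assert (E2 : y ^ (16 * i + 8) = y ^ (16 * i + 6) * y ^ 2) by (rewrite L_add; f_equal; lia).
 assert (H2 : y ^ 2 <> 0) by (apply Cpow_nz; auto).
 transitivity ((1 - y ^ (16 * i + 16)) * ((1 - y ^ 2 * y ^ (16 * i + 8)) * (1 - y ^ (16 * i + 8) / y ^ 2))).
 field; auto. rewrite E1, E2. field; auto. Qed.

Definition sfac i := (1 - sg (S i) * y ^ (4 * i + 4)) * ((1 + sg (S i) * y ^ (4 * i + 3)) * (1 + sg i * y ^ (4 * i + 1))).

Lemma facS i : (1 - ((Ci * y^2) * (Ci * y^2)) ^ (S i)) * ((1 + (Ci * y) * (Ci * y^2) ^ (2 * i + 1)) * (1 + / (Ci * y) * (Ci * y^2) ^ (2 * i + 1)))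
  = sfac i.
Proof. unfold sfac.
 assert (E1 : ((Ci * y^2) * (Ci * y^2)) ^ (S i) = sg (S i) * y ^ (4 * i + 4)).
 { assert (EQ : (Ci * y^2) * (Ci * y^2) = - (y ^ 4)).
   { transitivity ((Ci*Ci) * (y^2*y^2)). ring. rewrite Ci2. simpl. ring. }
   rewrite EQ.
   rewrite L_neg, L_pp. f_equal. f_equal. lia. }
 assert (Eq : (Ci * y^2) ^ (2 * i + 1) = sg i * Ci * y ^ (4 * i + 2)).
 { rewrite Cpow_mult_l, L_pp, Cpow_add_r, Ci_even. replace (2 * (2 * i + 1))%nat with (4 * i + 2)%nat by lia. simpl. ring. }
 assert (E2 : (Ci * y) * (Ci * y^2) ^ (2 * i + 1) = sg (S i) * y ^ (4 * i + 3)).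
 { rewrite Eq. rewrite sg_S. replace (4 * i + 3)%nat with (S (4 * i + 2)) by lia. rewrite Cpow_S.
   transitivity (sg i * (Ci * Ci) * (y * y ^ (4 * i + 2))). ring. rewrite Ci2. ring. }
 assert (E3 : / (Ci * y) * (Ci * y^2) ^ (2 * i + 1) = sg i * y ^ (4 * i + 1)).
 { rewrite Eq. replace (4 * i + 2)%nat with (S (4 * i + 1)) by lia. rewrite Cpow_S. field. split; auto. apply Ci_nz. }
 rewrite E1, E2, E3. reflexivity. Qed.

End Facs.

Lemma sfac_prod (x : C) i : sfac x i * sfac (- x) i =
  (1 - sg (S i) * x ^ (4 * i + 4)) * (1 - sg (S i) * x ^ (4 * i + 4)) * ((1 - x ^ (8 * i + 6)) * (1 - x ^ (8 * i + 2))).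
Proof. unfold sfac. rewrite !L_neg.
 replace (4 * i + 4)%nat with (2 * (2 * i + 2))%nat by lia. rewrite sg_even.
 replace (4 * i + 3)%nat with (2 * (2 * i + 1) + 1)%nat by lia. rewrite sg_odd.
 replace (4 * i + 1)%nat with (2 * (2 * i) + 1)%nat by lia. rewrite sg_odd.
 assert (E1 : x ^ (2 * (2 * i + 1) + 1) * x ^ (2 * (2 * i + 1) + 1) = x ^ (8 * i + 6)) by (rewrite L_add; f_equal; lia).
 assert (E2 : x ^ (2 * (2 * i) + 1) * x ^ (2 * (2 * i) + 1) = x ^ (8 * i + 2)) by (rewrite L_add; f_equal; lia).
 assert (S1 := sg_sq (S i)). assert (S2 := sg_sq i).
 transitivity ((1 - sg (S i) * x ^ (2 * (2 * i + 2))) * (1 - sg (S i) * x ^ (2 * (2 * i + 2))) *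
   ((1 - (sg (S i) * sg (S i)) * (x ^ (2 * (2 * i + 1) + 1) * x ^ (2 * (2 * i + 1) + 1))) *
    (1 - (sg i * sg i) * (x ^ (2 * (2 * i) + 1) * x ^ (2 * (2 * i) + 1))))).
 ring. rewrite S1, S2, E1, E2. ring. Qed.


Section Fin.
Variable x : C.
Hypothesis Hx : x <> 0.

Definition P4p N := prodC (fun j => 1 + x ^ (8 * j + 4)) N.
Definition P8p N := prodC (fun j => 1 + x ^ (8 * j + 8)) N.
Definition JA N := JP ((x^2)^4) (- ((x^2)^3)) N.
Definition JB N := JP ((x^2)^4) (- (x^2)) N.
Definition JS (y : C) M := JP (Ci * y^2) (Ci * y) M.

Lemma Hmx : - x <> 0.
Proof. intros E. apply Hx. replace x with (- - x) by ring. rewrite E. ring. Qed.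

Lemma JS_real (y : C) M : y <> 0 -> JS y M = prodC (sfac y) M.
Proof. intros Hy. unfold JS, JP. apply prodC_ext. intros i _. apply facS; auto. Qed.

Lemma finite_id N : P8p N * P8p N * (JS x (2 * N) * JS (- x) (2 * N)) = P4p N * P4p N * (JA N * JB N).
Proof.
 rewrite (JS_real x) by auto. rewrite (JS_real (- x)) by apply Hmx.
 rewrite <- prodC_mult. rewrite (prodC_ext _ _ _ (fun i _ => sfac_prod x i)).
 rewrite prodC_split2. unfold P8p, P4p, JA, JB, JP.
 rewrite (prodC_ext (fun i => (1 - (((x ^ 2) ^ 4) * ((x ^ 2) ^ 4)) ^ S i) * ((1 + - ((x ^ 2) ^ 3) * ((x ^ 2) ^ 4) ^ (2 * i + 1)) * (1 + / - ((x ^ 2) ^ 3) * ((x ^ 2) ^ 4) ^ (2 * i + 1)))) _ _ (fun i _ => facA x Hx i)).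
 rewrite (prodC_ext (fun i => (1 - (((x ^ 2) ^ 4) * ((x ^ 2) ^ 4)) ^ S i) * ((1 + - (x ^ 2) * ((x ^ 2) ^ 4) ^ (2 * i + 1)) * (1 + / - (x ^ 2) * ((x ^ 2) ^ 4) ^ (2 * i + 1)))) _ _ (fun i _ => facB x Hx i)).
 rewrite <- !prodC_mult. apply prodC_ext. intros j _.
 assert (s1 : sg (S (2 * j)) = - (1)) by (replace (S (2 * j)) with (2 * j + 1)%nat by lia; apply sg_odd).
 assert (s2 : sg (S (2 * j + 1)) = 1) by (replace (S (2 * j + 1)) with (2 * (j + 1))%nat by lia; apply sg_even).
 assert (p1 : x ^ (4 * (2 * j) + 4) = x ^ (8 * j + 4)) by (f_equal; lia).
 assert (p2 : x ^ (4 * (2 * j + 1) + 4) = x ^ (8 * j + 8)) by (f_equal; lia).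
 assert (p3 : x ^ (8 * (2 * j) + 6) = x ^ (16 * j + 6)) by (f_equal; lia).
 assert (p4 : x ^ (8 * (2 * j) + 2) = x ^ (16 * j + 2)) by (f_equal; lia).
 assert (p5 : x ^ (8 * (2 * j + 1) + 6) = x ^ (16 * j + 14)) by (f_equal; lia).
 assert (p6 : x ^ (8 * (2 * j + 1) + 2) = x ^ (16 * j + 10)) by (f_equal; lia).
 assert (p7 : x ^ (16 * j + 16) = x ^ (8 * j + 8) * x ^ (8 * j + 8)) by (rewrite L_add; f_equal; lia).
 rewrite s1, s2, p1, p2, p3, p4, p5, p6, p7. ring. Qed.

End Fin.


Lemma sg_add2 k m : sg (2 * k + m) = sg m.
Proof. unfold sg. rewrite Cpow_add_r. fold (sg (2 * k)). fold (sg m). rewrite sg_even. ring. Qed.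
Lemma sg_nz k : sg k <> 0.
Proof. intros E. assert (H := sg_sq k). rewrite E in H. apply C1_nz. rewrite <- H. ring. Qed.
Lemma sg_inv k : / sg k = sg k.
Proof. assert (H := sg_sq k). assert (Hn := sg_nz k). 
 transitivity (/ sg k * (sg k * sg k)). rewrite H; ring. field; auto. Qed.

Section Dis.
Variable y : C.
Hypothesis Hy : y <> 0.
Let QS := Ci * y ^ 2.
Let zS := Ci * y.
Let QA := (y ^ 2) ^ 4.
Let zA := - ((y ^ 2) ^ 3).
Let zB := - (y ^ 2).

Lemma Cipow_nz n : Ci ^ n <> 0. Proof. apply Cpow_nz, Ci_nz. Qed.
Lemma ypow_nz n : y ^ n <> 0. Proof. apply Cpow_nz; auto. Qed.

Lemma d1 n : Tj QS zS (2 * n) = Tj QA zB n.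
Proof. unfold Tj, QS, zS, QA, zB. rewrite !Cpow_mult_l, L_neg, !L_pp.
 assert (c1 : Ci ^ (2 * n * (2 * n)) = 1).
 { replace (2 * n * (2 * n))%nat with (2 * (2 * (n * n)))%nat by nia. rewrite Ci_even. apply sg_even. }
 assert (e1 : y ^ (2 * (2 * n * (2 * n))) = y ^ (2 * (4 * (n * n)))) by (f_equal; nia).
 rewrite c1, e1, Ci_even. ring. Qed.

Lemma d2 n : Tj QS zS (2 * n + 1) = y * Uj QA zA n.
Proof. unfold Tj, Uj, QS, zS, QA, zA. rewrite !Cpow_mult_l, L_neg, !L_pp.
 set (E1 := ((2 * n + 1) * (2 * n + 1))%nat).
 assert (c : Ci ^ E1 * Ci ^ (2 * n + 1) = sg (S n)).
 { rewrite L_add. replace (E1 + (2 * n + 1))%nat with (2 * (2 * (n * (n + 1)) + S n))%nat by (unfold E1; nia).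
   rewrite Ci_even, sg_add2. reflexivity. }
 assert (e : y * y ^ (2 * (4 * (S n * S n))) = (y ^ (2 * E1) * y ^ (2 * n + 1)) * y ^ (2 * (3 * S n))).
 { rewrite !L_add. rewrite <- Cpow_S. f_equal. unfold E1. nia. }
 transitivity ((Ci ^ E1 * Ci ^ (2 * n + 1)) * (y ^ (2 * E1) * y ^ (2 * n + 1))). ring. rewrite c.
 transitivity ((y * y ^ (2 * (4 * (S n * S n)))) / (sg (S n) * y ^ (2 * (3 * S n)))).
 2: { field. split; [apply ypow_nz | apply sg_nz]. }
 rewrite e. transitivity (y ^ (2 * E1) * y ^ (2 * n + 1) * / sg (S n)).
 rewrite sg_inv. ring. field. split; [apply ypow_nz | apply sg_nz]. Qed.

Lemma d3 n : Uj QS zS (2 * n) = y * Tj QA zA n.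
Proof. unfold Tj, Uj, QS, zS, QA, zA. rewrite !Cpow_mult_l, L_neg, !L_pp.
 set (E := (S (2 * n) * S (2 * n))%nat).
 assert (c : Ci ^ E = sg n * Ci ^ (S (2 * n))).
 { replace E with (2 * (2 * (n * n) + n) + S (2 * n))%nat by (unfold E; nia).
   rewrite <- L_add, Ci_even, sg_add2. reflexivity. }
 assert (e : y ^ (2 * E) = y * y ^ (2 * (4 * (n * n))) * y ^ (2 * (3 * n)) * y ^ S (2 * n)).
 { rewrite <- Cpow_S, !L_add. f_equal. unfold E. nia. }
 rewrite c, e. field. split; [apply ypow_nz | apply Cipow_nz]. Qed.

Lemma d4 n : Uj QS zS (2 * n + 1) = Uj QA zB n.
Proof. unfold Tj, Uj, QS, zS, QA, zB. rewrite !Cpow_mult_l, L_neg, !L_pp.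
 assert (c1 : Ci ^ (S (2 * n + 1) * S (2 * n + 1)) = 1).
 { replace (S (2 * n + 1) * S (2 * n + 1))%nat with (2 * (2 * ((n + 1) * (n + 1))))%nat by nia.
   rewrite Ci_even. apply sg_even. }
 assert (c2 : Ci ^ S (2 * n + 1) = sg (S n)).
 { replace (S (2 * n + 1)) with (2 * S n)%nat by lia. apply Ci_even. }
 assert (e1 : y ^ (2 * (S (2 * n + 1) * S (2 * n + 1))) = y ^ (2 * (4 * (S n * S n)))) by (f_equal; nia).
 assert (e2 : y ^ S (2 * n + 1) = y ^ (2 * S n)) by (f_equal; lia).
 rewrite c1, c2, e1, e2. field. split; [apply ypow_nz | apply sg_nz]. Qed.

End Dis.

Lemma dissect (f : nat -> C) l l1 l2 : cv (sumC f) l -> cv (sumC (fun n => f (2 * n)%nat)) l1 ->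
  cv (sumC (fun n => f (2 * n + 1)%nat)) l2 -> l = l1 + l2.
Proof. intros H H1 H2. apply (cv_unique (fun N => sumC f (2 * N))).
 apply (cv_sub (sumC f) (fun N => 2 * N)%nat). apply sub_2n. auto.
 apply (cv_ext (fun N => sumC (fun n => f (2 * n)%nat) N + sumC (fun n => f (2 * n + 1)%nat) N)).
 intros; rewrite sumC_split2; auto. apply cv_plus; auto. Qed.

Lemma Cmod_lt1_pow (y : C) n : (Cmod y < 1)%R -> (Cmod (y ^ S n) < 1)%R.
Proof. intros H. rewrite Cmod_pow. assert (0 <= Cmod y)%R by apply Cmod_ge_0.
 simpl. assert (Cmod y ^ n <= 1)%R by (apply pow_le_one; lra). nra. Qed.

Lemma Copp_nz (a : C) : a <> 0 -> - a <> 0.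
Proof. intros H E. apply H. replace a with (- - a) by ring. rewrite E. ring. Qed.

Lemma theta_rel (y : C) : y <> 0 -> (Cmod y < 1)%R -> exists tS tA tB,
  cv (JP (Ci * y ^ 2) (Ci * y)) tS /\ cv (JP ((y ^ 2) ^ 4) (- ((y ^ 2) ^ 3))) tA /\
  cv (JP ((y ^ 2) ^ 4) (- (y ^ 2))) tB /\ tS = tB + y * tA.
Proof. intros Hy Hy1.
 assert (HQS : Ci * y ^ 2 <> 0) by (apply Cmult_neq_0; [apply Ci_nz | apply Cpow_nz; auto]).
 assert (HzS : Ci * y <> 0) by (apply Cmult_neq_0; [apply Ci_nz | auto]).
 assert (HQS1 : (Cmod (Ci * y ^ 2) < 1)%R) by (rewrite Cmod_mult, Cmod_Ci, Rmult_1_l; apply Cmod_lt1_pow; auto).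
 assert (HQA : (y ^ 2) ^ 4 <> 0) by (apply Cpow_nz, Cpow_nz; auto).
 assert (HQA1 : (Cmod ((y ^ 2) ^ 4) < 1)%R) by (apply Cmod_lt1_pow, Cmod_lt1_pow; auto).
 assert (HzA : - ((y ^ 2) ^ 3) <> 0) by (apply Copp_nz, Cpow_nz, Cpow_nz; auto).
 assert (HzB : - (y ^ 2) <> 0) by (apply Copp_nz, Cpow_nz; auto).
 destruct (jtp_ex _ _ HzS HQS1) as [S1S [S2S [H1S H2S]]].
 destruct (jtp_ex _ _ HzA HQA1) as [S1A [S2A [H1A H2A]]].
 destruct (jtp_ex _ _ HzB HQA1) as [S1B [S2B [H1B H2B]]].
 exists (S1S + S2S), (S1A + S2A), (S1B + S2B). split; [|split; [|split]].
 - apply jtp; auto.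
 - apply jtp; auto.
 - apply jtp; auto.
 - assert (E1 : S1S = S1B + y * S2A).
   { apply (dissect _ _ _ _ H1S).
     apply (cv_ext (sumC (Tj ((y ^ 2) ^ 4) (- (y ^ 2))))); auto. intros N. apply sumC_ext. intros k _. symmetry. apply d1; auto.
     apply (cv_ext (fun N => y * sumC (Uj ((y ^ 2) ^ 4) (- ((y ^ 2) ^ 3))) N)). intros N. rewrite <- sumC_scal. apply sumC_ext.
     intros k _. symmetry. apply d2; auto. apply cv_scal; auto. }
   assert (E2 : S2S = y * S1A + S2B).
   { apply (dissect _ _ _ _ H2S).
     apply (cv_ext (fun N => y * sumC (Tj ((y ^ 2) ^ 4) (- ((y ^ 2) ^ 3))) N)). intros N. rewrite <- sumC_scal. apply sumC_ext.
     intros k _. symmetry. apply d3; auto. apply cv_scal; auto.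
     apply (cv_ext (sumC (Uj ((y ^ 2) ^ 4) (- (y ^ 2))))); auto. intros N. apply sumC_ext. intros k _. symmetry. apply d4; auto. }
   rewrite E1, E2. ring. Qed.


Lemma cexp_add a b : cexp (a + b) = cexp a * cexp b.
Proof. destruct a as [a1 a2], b as [b1 b2]. unfold cexp. simpl.
 rewrite exp_plus, cos_plus, sin_plus. apply injective_projections; simpl; ring. Qed.

Lemma cexp_0 : cexp 0 = 1.
Proof. unfold cexp. simpl. rewrite exp_0, cos_0, sin_0. apply injective_projections; simpl; ring. Qed.

Lemma cexp_nat k w : cexp (RtoC (INR k) * w) = cexp w ^ k.
Proof. induction k.
 - simpl. replace (RtoC 0 * w) with (RtoC 0) by ring. apply cexp_0.
 - rewrite S_INR, RtoC_plus. replace ((RtoC (INR k) + RtoC 1) * w) with (RtoC (INR k) * w + w) by ring.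
   rewrite cexp_add, IHk. simpl. ring. Qed.

Lemma Cmod_cexp w : Cmod (cexp w) = exp (Re w).
Proof. unfold Cmod, cexp. simpl fst. simpl snd.
 replace ((exp (Re w) * cos (Im w)) ^ 2 + (exp (Re w) * sin (Im w)) ^ 2)%R with (exp (Re w) ^ 2)%R.
 apply sqrt_pow2. left; apply exp_pos.
 assert (H := sin2_cos2 (Im w)). unfold Rsqr in H. simpl. nra. Qed.

Lemma Cpow_one_l (a : C) : a ^ 1 = a. Proof. simpl. ring. Qed.

Section Main.
Variable tau : C.
Hypothesis Htau : (0 < Im tau)%R.

Let w := RtoC (2 * PI * (1/2)) * Ci * tau.
Let x := cexp w.

Lemma Re_w : Re w = (- PI * Im tau)%R.
Proof. unfold w. destruct tau as [t1 t2]. simpl. field. Qed.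

Lemma x_mod : Cmod x = exp (- PI * Im tau).
Proof. unfold x. rewrite Cmod_cexp, Re_w. reflexivity. Qed.

Lemma x_lt1 : (Cmod x < 1)%R.
Proof. rewrite x_mod. rewrite <- exp_0. apply exp_increasing. assert (H := PI_RGT_0). nra. Qed.

Lemma x_nz : x <> 0.
Proof. intros E. assert (H := x_mod). rewrite E, Cmod_0 in H. assert (H2 := exp_pos (- PI * Im tau)). lra. Qed.

Lemma qpow_x (r c : R) k t : (2 * PI * r * c = INR k * (2 * PI * (1/2)))%R -> t = RtoC c * tau ->
  cexp (RtoC (2 * PI * r) * Ci * t) = x ^ k.
Proof. intros H Ht. subst t. unfold x. rewrite <- cexp_nat. f_equal. unfold w.
 transitivity (RtoC (2 * PI * r * c) * Ci * tau). rewrite !RtoC_mult. ring.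
 rewrite H. rewrite !RtoC_mult. ring. Qed.

Lemma qpow_n n : qpow (INR n) tau = x ^ (2 * n).
Proof. unfold qpow. apply (qpow_x _ 1). rewrite mult_INR. simpl INR. field. ring. Qed.

Lemma qpow_8a : qpow (1/16) (RtoC 8 * tau) = x.
Proof. unfold qpow. rewrite <- (Cpow_one_l x). apply (qpow_x _ 8). simpl INR. field. auto. Qed.

Lemma qpow_8b i : qpow (INR (S i) / 2) (RtoC 8 * tau) = x ^ (8 * i + 8).
Proof. unfold qpow. apply (qpow_x _ 8). rewrite plus_INR, mult_INR, S_INR. simpl INR. field. auto. Qed.

Lemma qpow_8c i : qpow (INR (S i) / 2 - 1/4) (RtoC 8 * tau) = x ^ (8 * i + 4).
Proof. unfold qpow. apply (qpow_x _ 8). rewrite plus_INR, mult_INR, S_INR. simpl INR. field. auto. Qed.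

Lemma cprod_prodC f M : cprod f M = prodC (fun i => f (S i)) M.
Proof. induction M; simpl; auto. rewrite IHM; auto. Qed.

Lemma one_minus_xpow_nz k : (1 <= k)%nat -> 1 - x ^ k <> 0.
Proof. intros Hk. replace k with (S (k - 1)) by lia. apply one_minus_pow_nz. apply x_lt1. Qed.
Lemma one_plus_xpow_nz k : (1 <= k)%nat -> 1 + x ^ k <> 0.
Proof. intros Hk E. assert (H := Cmod_ge_1m (x ^ k)). rewrite E, Cmod_0 in H.
 replace k with (S (k - 1)) in H by lia. assert (H2 := Cmod_lt1_pow x (k - 1) x_lt1). lra. Qed.

Lemma xpow_le k j : (j <= k)%nat -> (Cmod (x ^ k) <= Cmod x ^ j)%R.
Proof. intros H. rewrite Cmod_pow. apply pow_decr; auto. split. apply Cmod_ge_0. left; apply x_lt1. Qed.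

Definition fv n := zpowC (1 - x ^ (2 * n)) (kron8 n).

Lemma kron8_cases n : kron8 n = 0%Z \/ kron8 n = 1%Z \/ kron8 n = (-1)%Z.
Proof. unfold kron8. destruct (n mod 8)%nat as [|[|[|[|[|[|[|[|m]]]]]]]]; auto. Qed.

Lemma zpow0 a : zpowC a 0 = 1. Proof. reflexivity. Qed.
Lemma zpow1 a : zpowC a 1 = a. Proof. simpl. ring. Qed.
Lemma zpowm1 a : zpowC a (-1) = / a. Proof. simpl. f_equal. ring. Qed.

Lemma v_cv : exists V : C, V <> 0 /\ cv (prodC (fun i => fv (S i))) V.
Proof. assert (Hx1 := x_lt1). assert (Hx0 : (0 <= Cmod x)%R) by apply Cmod_ge_0.
 apply (prod_cv_nz _ (/ (1 - Cmod x)) (Cmod x) ((1 - Cmod x) / 2)).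
 - left; apply Rinv_0_lt_compat; lra.
 - lra.
 - lra.
 - intros n. unfold fv. set (c := x ^ (2 * S n)).
   assert (Hc : (Cmod c <= Cmod x ^ n)%R) by (apply xpow_le; lia).
   assert (Hc1 : (Cmod c <= Cmod x)%R) by (eapply Rle_trans; [apply xpow_le with (j := 1%nat); lia | simpl; lra]).
   assert (HK : (1 <= / (1 - Cmod x))%R).
   { rewrite <- Rinv_1. apply Rinv_le_contravar; lra. }
   assert (Hpn : (0 <= Cmod x ^ n)%R) by (apply pow_le; auto).
   destruct (kron8_cases (S n)) as [E|[E|E]]; rewrite E.
   + rewrite zpow0. replace (RtoC 1 - 1) with (RtoC 0) by ring. rewrite Cmod_0. apply Rmult_le_pos; lra.
   + rewrite zpow1. replace (1 - c - 1) with (- c) by ring. rewrite Cmod_opp. nra.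
   + rewrite zpowm1. assert (H1c : 1 - c <> 0) by (apply one_minus_xpow_nz; lia).
     replace (/ (1 - c) - 1) with (c / (1 - c)) by (field; auto). rewrite Cmod_div by auto.
     assert (Hl : (1 - Cmod x <= Cmod (1 - c))%R).
     { assert (H := Cmod_ge_1m (- c)). rewrite Cmod_opp in H. replace (1 + - c) with (1 - c) in H by ring. lra. }
     unfold Rdiv. rewrite Rmult_comm. apply Rmult_le_compat; auto. left; apply Rinv_0_lt_compat.
     apply (proj1 (Cmod_gt_0 _)); auto. apply Cmod_ge_0. apply Rinv_le_contravar; lra.
 - intros n. unfold fv. set (c := x ^ (2 * S n)).
   assert (Hc1 : (Cmod c <= Cmod x)%R) by (eapply Rle_trans; [apply xpow_le with (j := 1%nat); lia | simpl; lra]).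
   assert (Hl : (1 - Cmod x <= Cmod (1 - c))%R).
   { assert (H := Cmod_ge_1m (- c)). rewrite Cmod_opp in H. replace (1 + - c) with (1 - c) in H by ring. lra. }
   destruct (kron8_cases (S n)) as [E|[E|E]]; rewrite E.
   + rewrite zpow0, Cmod_1. lra.
   + rewrite zpow1. lra.
   + rewrite zpowm1. assert (H1c : 1 - c <> 0) by (apply one_minus_xpow_nz; lia).
     rewrite Cmod_inv by auto. assert (Hu : (Cmod (1 - c) <= 2)%R).
     { replace (1 - c) with (1 + - c) by ring. eapply Rle_trans. apply Cmod_triangle. rewrite Cmod_1, Cmod_opp. lra. }
     assert (0 < Cmod (1 - c))%R by (apply (proj1 (Cmod_gt_0 _)); auto).
     apply Rle_trans with (/ 2)%R. lra. apply Rinv_le_contravar; lra. Qed.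

Lemma kron8_shift j r : kron8 (S (8 * j + r)) = kron8 (S r).
Proof. unfold kron8. replace (S (8 * j + r)) with (S r + j * 8)%nat by lia. rewrite Nat.Div0.mod_add. reflexivity. Qed.

Lemma fv_block j : prodC (fun r => fv (S (8 * j + r))) 8 * ((1 - x ^ (16 * j + 16)) * ((1 - x ^ (16 * j + 10)) * (1 - x ^ (16 * j + 6))))
   = (1 - x ^ (16 * j + 16)) * ((1 - x ^ (16 * j + 14)) * (1 - x ^ (16 * j + 2))).
Proof.
 assert (N6 := one_minus_xpow_nz (16 * j + 6) ltac:(lia)). assert (N10 := one_minus_xpow_nz (16 * j + 10) ltac:(lia)).
 assert (Ef : forall r, fv (S (8 * j + r)) = zpowC (1 - x ^ (16 * j) * x ^ (2 * r + 2)) (kron8 (S r))).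
 { intros r. unfold fv. rewrite kron8_shift. f_equal. f_equal. rewrite L_add. f_equal. lia. }
 assert (Ex : forall c, x ^ (16 * j + c) = x ^ (16 * j) * x ^ c) by (intros; rewrite L_add; auto).
 rewrite !prodC_S. change (prodC (fun r => fv (S (8 * j + r))) 0) with (RtoC 1). cbv beta. rewrite !Ef.
 rewrite !Ex. rewrite Ex in N6, N10. set (X := x ^ (16 * j)) in *. simpl. simpl in N6, N10.
 field. split; intros E; [apply N10 | apply N6]; rewrite <- E; cbv beta; ring. Qed.


Lemma v_part_eq M : v_partial tau M = x * prodC (fun i => fv (S i)) M.
Proof. unfold v_partial. rewrite cprod_prodC. f_equal. apply prodC_ext. intros i _. unfold fv. rewrite qpow_n. reflexivity. Qed.

Lemma v_rel N : v_partial tau (8 * N) * JB x N = x * JA x N.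
Proof. rewrite v_part_eq. rewrite (prodC_blocks _ 8 N). unfold JB, JA, JP.
 rewrite (prodC_ext (fun i => (1 - (((x ^ 2) ^ 4) * ((x ^ 2) ^ 4)) ^ S i) * ((1 + - ((x ^ 2) ^ 3) * ((x ^ 2) ^ 4) ^ (2 * i + 1)) * (1 + / - ((x ^ 2) ^ 3) * ((x ^ 2) ^ 4) ^ (2 * i + 1)))) _ _ (fun i _ => facA x x_nz i)).
 rewrite (prodC_ext (fun i => (1 - (((x ^ 2) ^ 4) * ((x ^ 2) ^ 4)) ^ S i) * ((1 + - (x ^ 2) * ((x ^ 2) ^ 4) ^ (2 * i + 1)) * (1 + / - (x ^ 2) * ((x ^ 2) ^ 4) ^ (2 * i + 1)))) _ _ (fun i _ => facB x x_nz i)).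
 rewrite <- Cmult_assoc, <- prodC_mult. f_equal. apply prodC_ext. intros j _. apply fv_block. Qed.

Lemma p_part_eq N : p_partial (RtoC 8 * tau) N = 2 * x * prodC (fun i => ((1 + x ^ (8 * i + 8)) / (1 + x ^ (8 * i + 4))) ^ 2) N.
Proof. unfold p_partial. rewrite cprod_prodC, qpow_8a. f_equal. apply prodC_ext. intros i _. rewrite qpow_8b, qpow_8c. reflexivity. Qed.

Lemma sq_prod (a b : nat -> C) N : (forall i, b i <> 0) ->
  prodC (fun i => (a i / b i) ^ 2) N * (prodC b N * prodC b N) = prodC a N * prodC a N.
Proof. intros Hb. induction N. simpl. ring.
 rewrite !prodC_S. transitivity ((prodC (fun i => (a i / b i) ^ 2) N * (prodC b N * prodC b N)) * ((a N / b N) ^ 2 * b N * b N)).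
 ring. rewrite IHN. simpl. field. auto. Qed.

Lemma p_rel N : p_partial (RtoC 8 * tau) N * (P4p x N * P4p x N) = 2 * x * (P8p x N * P8p x N).
Proof. rewrite p_part_eq. unfold P4p, P8p. rewrite <- Cmult_assoc. f_equal. apply sq_prod.
 intros i. apply one_plus_xpow_nz. lia. Qed.

Lemma P4_cv : exists L : C, L <> 0 /\ cv (P4p x) L.
Proof. destruct (prod_simple x (fun j => x ^ (8 * j + 4))) as [L [HL HcL]].
 apply x_lt1. intros j; apply xpow_le; lia. exists L; split; auto. Qed.
Lemma P8_cv : exists L : C, L <> 0 /\ cv (P8p x) L.
Proof. destruct (prod_simple x (fun j => x ^ (8 * j + 8))) as [L [HL HcL]].
 apply x_lt1. intros j; apply xpow_le; lia. exists L; split; auto. Qed.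

Lemma prod_simple_m k : (1 <= k)%nat -> exists L : C, L <> 0 /\ cv (prodC (fun j => 1 - x ^ (16 * j + k))) L.
Proof. intros Hk. destruct (prod_simple x (fun j => - x ^ (16 * j + k))) as [L [HL HcL]].
 apply x_lt1. intros j. rewrite Cmod_opp. apply xpow_le. lia.
 exists L. split; auto. Qed.

Lemma JB_cv_nz : exists L : C, L <> 0 /\ cv (JB x) L.
Proof. destruct (prod_simple_m 16) as [L1 [H1 C1]]. lia.
 destruct (prod_simple_m 10) as [L2 [H2 C2]]. lia.
 destruct (prod_simple_m 6) as [L3 [H3 C3]]. lia.
 exists (L1 * (L2 * L3)). split. apply Cmult_neq_0; auto. apply Cmult_neq_0; auto.
 apply (cv_ext (fun N => prodC (fun j => 1 - x ^ (16 * j + 16)) N * (prodC (fun j => 1 - x ^ (16 * j + 10)) N * prodC (fun j => 1 - x ^ (16 * j + 6)) N))).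
 { intros N. unfold JB, JP. rewrite <- !prodC_mult. apply prodC_ext. intros i _. symmetry. apply facB. apply x_nz. }
 apply cv_mult; auto. apply cv_mult; auto. Qed.

Lemma mult_eq0 (a b : C) : a * b = 0 -> b <> 0 -> a = 0.
Proof. intros H Hb. replace a with (a * b / b) by (field; auto). rewrite H. field. auto. Qed.

Theorem main : exists v p : C,
    filterlim (v_partial tau) eventually (locally v) /\
    filterlim (p_partial (RtoC 8 * tau)%C) eventually (locally p) /\
    v <> 0%C /\ p <> 0%C /\
    (2 / p = (1 - v ^ 2) / v)%C /\
    ((1 - v ^ 2) / v = 1 / v - v)%C.
Proof.
 assert (Hx := x_nz). assert (Hx1 := x_lt1).
 destruct v_cv as [V0 [HV0 HV]].
 set (v := x * V0).
 assert (Hv : cv (v_partial tau) v).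
 { apply (cv_ext (fun M => x * prodC (fun i => fv (S i)) M)). intros; rewrite v_part_eq; auto. apply cv_scal; auto. }
 assert (Hv0 : v <> 0) by (apply Cmult_neq_0; auto).
 destruct P4_cv as [P4 [HP4 HP4c]]. destruct P8_cv as [P8 [HP8 HP8c]].
 assert (HP4nz : forall N, P4p x N <> 0) by (intros; apply prodC_nz; intros; apply one_plus_xpow_nz; lia).
 set (p := 2 * x * (P8 * P8) / (P4 * P4)).
 assert (H2 : RtoC 2 <> 0). { intros E. apply RtoC_inj in E. lra. }
 assert (Hp : cv (p_partial (RtoC 8 * tau)) p).
 { apply (cv_ext (fun N => 2 * x * (P8p x N * P8p x N) / (P4p x N * P4p x N))).
   intros N. rewrite <- p_rel. field. apply HP4nz.
   apply cv_div. apply Cmult_neq_0; auto. apply cv_scal. apply cv_mult; auto. apply cv_mult; auto. }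
 assert (Hpnz : p <> 0).
 { intros E. assert (E2 : 2 * x * (P8 * P8) = p * (P4 * P4)) by (unfold p; field; auto).
   rewrite E in E2. assert (2 * x * (P8 * P8) <> 0) by (repeat apply Cmult_neq_0; auto).
   apply H. rewrite E2. ring. }
 destruct (theta_rel x Hx Hx1) as [tS [tA [tB [HS [HA [HB Erel]]]]]].
 assert (Hmx : - x <> 0) by (apply Copp_nz; auto).
 assert (Hmx1 : (Cmod (- x) < 1)%R) by (rewrite Cmod_opp; auto).
 destruct (theta_rel (- x) Hmx Hmx1) as [tS' [tA' [tB' [HS' [HA' [HB' Erel']]]]]].
 assert (Esq : (- x) ^ 2 = x ^ 2) by (simpl; ring).
 rewrite Esq in HA', HB'.
 assert (EA : tA' = tA) by (eapply cv_unique; eauto). assert (EB : tB' = tB) by (eapply cv_unique; eauto).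
 rewrite EA, EB in Erel'.
 assert (E1 : P8 * P8 * (tS * tS') = P4 * P4 * (tA * tB)).
 { apply (cv_unique (fun N => P8p x N * P8p x N * (JS x (2 * N) * JS (- x) (2 * N)))).
   - apply cv_mult. apply cv_mult; auto. apply cv_mult.
     apply (cv_sub (JS x) (fun N => 2 * N)%nat). apply sub_2n. exact HS.
     apply (cv_sub (JS (- x)) (fun N => 2 * N)%nat). apply sub_2n. exact HS'.
   - apply (cv_ext (fun N => P4p x N * P4p x N * (JA x N * JB x N))). intros N. symmetry. apply finite_id; auto.
     apply cv_mult. apply cv_mult; auto. apply cv_mult. exact HA. exact HB. }
 destruct JB_cv_nz as [LB [HLB HLBc]].
 assert (HtB : tB <> 0). { assert (tB = LB) by (eapply cv_unique; eauto). rewrite H; auto. }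
 assert (Ev : v * tB = x * tA).
 { apply (cv_unique (fun N => v_partial tau (8 * N) * JB x N)).
   - apply cv_mult. apply (cv_sub (v_partial tau) (fun N => 8 * N)%nat); auto. intros M; exists M; intros; lia. exact HB.
   - apply (cv_ext (fun N => x * JA x N)). intros N. symmetry. apply v_rel. apply cv_scal. exact HA. }
 assert (EAv : tA = v * tB / x). { rewrite Ev. field. auto. }
 assert (K : x * (P8 * P8) * (1 - v ^ 2) = P4 * P4 * v).
 { assert (Z : (x * (P8 * P8) * (1 - v ^ 2) - P4 * P4 * v) * (tB * tB) = 0).
   { transitivity (x * (P8 * P8 * (tS * tS') - P4 * P4 * (tA * tB))).
     rewrite Erel, Erel', EAv. field. auto. rewrite E1. ring. }
   apply mult_eq0 in Z. 2: { apply Cmult_neq_0; auto. }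
   replace (x * (P8 * P8) * (1 - v ^ 2)) with ((x * (P8 * P8) * (1 - v ^ 2) - P4 * P4 * v) + P4 * P4 * v) by ring.
   rewrite Z. ring. }
 exists v, p. split; [apply cv_filterlim; auto|]. split; [apply cv_filterlim; auto|].
 split; auto. split; auto. split.
 - replace (1 - v ^ 2) with (P4 * P4 * v / (x * (P8 * P8))).
   unfold p. field. repeat split; auto.
   rewrite <- K. field. split; auto.
 - field. auto. Qed.

End Main.


Close Scope C_scope.
Open Scope R_scope.

Theorem proposition5 (tau : C) (Htau : 0 < Im tau) :
  exists v p : C,
    filterlim (v_partial tau) eventually (locally v) /\
    filterlim (p_partial (RtoC 8 * tau)%C) eventually (locally p) /\
    v <> 0%C /\ p <> 0%C /\
    (2 / p = (1 - v ^ 2) / v)%C /\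
    ((1 - v ^ 2) / v = 1 / v - v)%C.
Proof.
  exact (main tau Htau).
Qed.
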